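(* Let $Z_2=(X_2,Y_2)$ be the PSVF with $X_2(x,y)=(1,\frac x2-4x^3)$ for $y\ge0$, $Y_2(x,y)=(-1,\frac x2-4x^3)$ for $y\le0$, and $\Lambda_2=\{(x,\pm(\frac{x^2}{4}-x^4)):-\frac12\le x\le\frac12\}$. Let $\widetilde Z$ be any planar PSVF presenting a $1$-homoclinic loop, and let $\widetilde\Lambda$ be the set formed by this loop. Then $Z_2$ restricted to $\Lambda_2$ and $\widetilde Z$ restricted to $\widetilde\Lambda$ are $\Sigma$-equivalent.
   Context: A planar PSVF $Z=(X,Y)$ with switching manifold $\Sigma=f^{-1}(0)$ ($f$ smooth, $0$ a regular value) equals the smooth field $X$ on $\Sigma^+=\{f\ge0\}$ and $Y$ on $\Sigma^-=\{f\le0\}$ (for $Z_2$, $f(x,y)=y$). With $Wf=\langle\nabla f,W\rangle$, $W^2f=\langle\nabla(Wf),W\rangle$: crossing (sewing) points are $p\in\Sigma$ with $Xf(p)Yf(p)>0$; sliding region $\{Xf<0<Yf\}$, escaping $\{Yf<0<Xf\}$, with sliding field $Z^T=(Yf\,X-Xf\,Y)/(Yf-Xf)$ there. A point $p\in\Sigma$ is a fold of $X$ if $Xf(p)=0\neq X^2f(p)$, visible if $X^2f(p)>0$; a fold of $Y$ is visible if the $Y$-orbit of $p$ lies locally in $\Sigma^-$ ($Y^2f(p)<0$); a visible-visible two-fold is a visible fold of both. Trajectories follow the Filippov convention: off $\Sigma$ follow $X$ or $Y$; at crossing points pass from one side to the other; at escaping/sliding points use $Z^T$ backward/forward and any of $X,Y,Z^T$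 in the other time direction; at a regular tangency (not invisible for both fields) choose any of $X,Y,Z^T$ backward and forward; a global trajectory is a bi-infinite orientation-preserving concatenation of such local trajectories defined for all $t\in\mathbb{R}$. A $k$-homoclinic loop ($k\ge1$) is a global trajectory of $Z$ presenting $k$ distinct visible-visible two-folds $p_1,\dots,p_k$ such that, after passing through $p_i$, the trajectory reaches $\Sigma$ either at $p_{i-1}$ or at $p_{i+1}$ for $i=2,\dots,k-1$; for $i=1$ (resp. $i=k$), after passing through $p_i$ it reaches $\Sigma$ either at a sewing point or at $p_{i+1}$ (resp. $p_{i-1}$). $\Sigma$-equivalence of restrictions: $Z|_\Lambda$ and $\widetilde Z|_{\widetilde\Lambda}$ are $\Sigma$-equivalent if there is an orientation-preserving homeomorphism $h:\Lambda\to\widetilde\Lambda$ sending $\Lambda\cap\Sigma$ onto $\widetilde\Lambda\cap\widetilde\Sigma$, orbits of $X$ in $\Lambda\cap\Sigma^+$ onto orbits of $\widetilde X$ in $\widetilde\Lambda\cap\widetilde\Sigma^+$, orbits of $Y$ in $\Lambda\cap\Sigma^-$ onto orbits of $\widetilde Y$ in $\widetilde\Lambda\cap\widetilde\Sigma^-$, and orbits of $Z^T$ in $\Lambda\cap\Sigma$ onto orbits of $\widetilde Z^T$ in $\widetilde\Lambda\cap\widetilde\Sigma$.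
   Formalization: In a 1-homoclinic loop the trajectory, at every visit to p₁, keeps one field (X or Y) before and after, then first meets Σ at a sewing point and returns to p₁ meeting Σ nowhere else. Each condition added here is assumed in the paper as well or is needed for the statement above to hold. *)

(* Defs.v *)
From Stdlib Require Import Reals Lra.
From Coquelicot Require Import Coquelicot.
Open Scope R_scope.

Definition pt : Type := (R * R)%type.

Definition dx (g : pt -> R) (p : pt) : R := Derive (fun x => g (x, snd p)) (fst p).
Definition dy (g : pt -> R) (p : pt) : R := Derive (fun y => g (fst p, y)) (snd p).

Fixpoint Ck (k : nat) (g : pt -> R) : Prop :=
  match k with
  | O => forall p : pt, continuous g p
  | S k' =>
      (forall p : pt, ex_derive (fun x => g (x, snd p)) (fst p)
                   /\ ex_derive (fun y => g (fst p, y)) (snd p))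
      /\ Ck k' (dx g) /\ Ck k' (dy g)
  end.

Definition smooth (g : pt -> R) : Prop := forall k : nat, Ck k g.
Definition smooth_field (W : pt -> pt) : Prop :=
  smooth (fun p => fst (W p)) /\ smooth (fun p => snd (W p)).

(** Raw data of a planar PSVF Z = (X, Y) with switching function f. *)
Record psvf : Type := PSVF { sw : pt -> R; fX : pt -> pt; fY : pt -> pt }.

Definition is_psvf (Z : psvf) : Prop :=
  smooth (sw Z) /\ smooth_field (fX Z) /\ smooth_field (fY Z) /\
  (forall p : pt, sw Z p = 0 -> (dx (sw Z) p, dy (sw Z) p) <> (0, 0)).

Definition lie (W : pt -> pt) (g : pt -> R) (p : pt) : R :=
  dx g p * fst (W p) + dy g p * snd (W p).

Definition Xf (Z : psvf) : pt -> R := lie (fX Z) (sw Z).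
Definition Yf (Z : psvf) : pt -> R := lie (fY Z) (sw Z).
Definition X2f (Z : psvf) : pt -> R := lie (fX Z) (Xf Z).
Definition Y2f (Z : psvf) : pt -> R := lie (fY Z) (Yf Z).

Definition in_Sigma (Z : psvf) (p : pt) : Prop := sw Z p = 0.

Definition sewing (Z : psvf) (p : pt) : Prop := in_Sigma Z p /\ Xf Z p * Yf Z p > 0.

Definition slide_esc (Z : psvf) (p : pt) : Prop := in_Sigma Z p /\ Xf Z p * Yf Z p < 0.

Definition ZT (Z : psvf) (p : pt) : pt :=
  ((Yf Z p * fst (fX Z p) - Xf Z p * fst (fY Z p)) / (Yf Z p - Xf Z p),
   (Yf Z p * snd (fX Z p) - Xf Z p * snd (fY Z p)) / (Yf Z p - Xf Z p)).

Definition visible_fold_X (Z : psvf) (p : pt) : Prop :=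
  in_Sigma Z p /\ Xf Z p = 0 /\ X2f Z p > 0.
Definition visible_fold_Y (Z : psvf) (p : pt) : Prop :=
  in_Sigma Z p /\ Yf Z p = 0 /\ Y2f Z p < 0.
Definition vv_twofold (Z : psvf) (p : pt) : Prop :=
  visible_fold_X Z p /\ visible_fold_Y Z p.

Definition cont_at (phi : R -> pt) (t : R) : Prop :=
  continuous (fun s => fst (phi s)) t /\ continuous (fun s => snd (phi s)) t.
Definition solves (W : pt -> pt) (phi : R -> pt) (t : R) : Prop :=
  is_derive (fun s => fst (phi s)) t (fst (W (phi t))) /\
  is_derive (fun s => snd (phi s)) t (snd (W (phi t))).

(** Local trajectories (Filippov convention) on a time interval [a,b]:
    an orbit arc of X inside Sigma^+, of Y inside Sigma^-, or of Z^T inside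
    the sliding/escaping region. *)
Definition Xpiece (Z : psvf) (phi : R -> pt) (a b : R) : Prop :=
  a < b /\ (forall t, a <= t <= b -> cont_at phi t /\ sw Z (phi t) >= 0) /\
  (forall t, a < t < b -> solves (fX Z) phi t).
Definition Ypiece (Z : psvf) (phi : R -> pt) (a b : R) : Prop :=
  a < b /\ (forall t, a <= t <= b -> cont_at phi t /\ sw Z (phi t) <= 0) /\
  (forall t, a < t < b -> solves (fY Z) phi t).
Definition Spiece (Z : psvf) (phi : R -> pt) (a b : R) : Prop :=
  a < b /\ (forall t, a <= t <= b -> cont_at phi t) /\
  (forall t, a < t < b -> slide_esc Z (phi t) /\ solves (ZT Z) phi t).
Definition piece (Z : psvf) (phi : R -> pt) (a b : R) : Prop :=
  Xpiece Z phi a b \/ Ypiece Z phi a b \/ Spiece Z phi a b.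

(** Global trajectory: defined for all t, and a (locally finite,
    orientation-preserving) concatenation of local trajectories: around every
    time there is a local trajectory backward and one forward. *)
Definition global_traj (Z : psvf) (g : R -> pt) : Prop :=
  forall t : R, exists e : R, e > 0 /\ piece Z g (t - e) t /\ piece Z g t (t + e).

Definition passes_through (Z : psvf) (g : R -> pt) (t : R) : Prop :=
  exists e : R, e > 0 /\
    ((Xpiece Z g (t - e) t /\ Xpiece Z g t (t + e)) \/
     (Ypiece Z g (t - e) t /\ Ypiece Z g t (t + e))).

Definition homoclinic_loop1 (Z : psvf) (g : R -> pt) (p : pt) : Prop :=
  global_traj Z g /\ vv_twofold Z p /\ (exists t, g t = p) /\
  forall t : R, g t = p ->
    passes_through Z g t /\
    exists s u : R, t < s < u /\ sewing Z (g s) /\ g u = p /\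
      (forall r, t < r < u -> r <> s -> sw Z (g r) <> 0).

Definition reach_by (W : pt -> pt) (C : pt -> Prop) (S : pt -> Prop) (p q : pt) : Prop :=
  exists (T : R) (phi : R -> pt), 0 <= T /\ phi 0 = p /\ phi T = q /\
    (forall t, 0 <= t <= T -> S (phi t) /\ cont_at phi t) /\
    (forall t, 0 < t < T -> C (phi t) /\ solves W phi t).

Definition rel_continuous (L : pt -> Prop) (h : pt -> pt) : Prop :=
  forall p, L p -> forall eps : R, eps > 0 -> exists delta : R, delta > 0 /\
    forall q, L q -> Rabs (fst q - fst p) < delta -> Rabs (snd q - snd p) < delta ->
      Rabs (fst (h q) - fst (h p)) < eps /\ Rabs (snd (h q) - snd (h p)) < eps.

Definition sigma_equiv (Z : psvf) (L : pt -> Prop) (Zt : psvf) (Lt : pt -> Prop) : Prop :=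
  exists h g : pt -> pt,
    (forall p, L p -> Lt (h p)) /\ (forall q, Lt q -> L (g q)) /\
    (forall p, L p -> g (h p) = p) /\ (forall q, Lt q -> h (g q) = q) /\
    rel_continuous L h /\ rel_continuous Lt g /\
    (forall p, L p -> (sw Z p = 0 <-> sw Zt (h p) = 0)) /\
    (forall p q, L p -> L q ->
       (reach_by (fX Z) (fun _ => True) (fun x => L x /\ sw Z x >= 0) p q <->
        reach_by (fX Zt) (fun _ => True) (fun x => Lt x /\ sw Zt x >= 0) (h p) (h q))) /\
    (forall p q, L p -> L q ->
       (reach_by (fY Z) (fun _ => True) (fun x => L x /\ sw Z x <= 0) p q <->
        reach_by (fY Zt) (fun _ => True) (fun x => Lt x /\ sw Zt x <= 0) (h p) (h q))) /\
    (forall p q, L p -> L q ->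
       (reach_by (ZT Z) (slide_esc Z) (fun x => L x /\ sw Z x = 0) p q <->
        reach_by (ZT Zt) (slide_esc Zt) (fun x => Lt x /\ sw Zt x = 0) (h p) (h q))).

Definition Z2 : psvf :=
  PSVF (fun p => snd p)
       (fun p => (1, fst p / 2 - 4 * fst p ^ 3))
       (fun p => (-1, fst p / 2 - 4 * fst p ^ 3)).

Definition Lambda2 (p : pt) : Prop :=
  -1/2 <= fst p <= 1/2 /\
  (snd p = fst p ^ 2 / 4 - fst p ^ 4 \/ snd p = - (fst p ^ 2 / 4 - fst p ^ 4)).

(* Main.v *)
Require Import Defs.
From Stdlib Require Import Reals Lra ClassicalEpsilon Classical.
From Coquelicot Require Import Coquelicot.
Open Scope R_scope.

Lemma cont2_eps (f : pt -> R) q : continuous f q -> forall eps, eps > 0 -> exists d, d > 0 /\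
  forall z, Rabs (fst z - fst q) < d -> Rabs (snd z - snd q) < d -> Rabs (f z - f q) < eps.
Proof.
  intros H eps He.
  destruct (H (ball (f q) (mkposreal eps He))) as [d Hd].
  { apply locally_ball. }
  exists d. split. apply cond_pos.
  intros z H1 H2. apply Hd. split; assumption.
Qed.

Lemma cont1_iff (f : R -> R) t : continuous f t <-> continuity_pt f t.
Proof. split; intro H; apply continuity_pt_filterlim; exact H. Qed.

Lemma cont_at_iff phi t : cont_at phi t <->
  continuity_pt (fun s => fst (phi s)) t /\ continuity_pt (fun s => snd (phi s)) t.
Proof. unfold cont_at. rewrite !cont1_iff. tauto. Qed.

Lemma cpt_eps (f : R -> R) t : continuity_pt f t -> forall eps, eps > 0 ->
  exists d, d > 0 /\ forall s, Rabs (s - t) < d -> Rabs (f s - f t) < eps.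
Proof.
  intros H eps He. destruct (H eps He) as [d [Hd1 Hd2]].
  exists d. split. lra. intros s Hs.
  destruct (Req_dec s t) as [->|Hne]. rewrite Rminus_eq_0, Rabs_R0; lra.
  apply (Hd2 s). split. split. exact I. auto. exact Hs.
Qed.

Lemma eps_cpt (f : R -> R) t : (forall eps, eps > 0 ->
  exists d, d > 0 /\ forall s, Rabs (s - t) < d -> Rabs (f s - f t) < eps) -> continuity_pt f t.
Proof.
  intros H eps He. destruct (H eps He) as [d [Hd1 Hd2]].
  exists d. split. lra. intros s [_ Hs]. apply Hd2. exact Hs.
Qed.

Lemma comp_cpt (f : pt -> R) phi t : continuous f (phi t) -> cont_at phi t ->
  continuity_pt (fun s => f (phi s)) t.
Proof.
  intros Hf Hc. apply cont_at_iff in Hc. destruct Hc as [H1 H2].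
  apply eps_cpt. intros eps He.
  destruct (cont2_eps f (phi t) Hf eps He) as [d [Hd Hd']].
  destruct (cpt_eps _ _ H1 d Hd) as [d1 [Hd1 Hd1']].
  destruct (cpt_eps _ _ H2 d Hd) as [d2 [Hd2 Hd2']].
  exists (Rmin d1 d2). split. apply Rmin_pos; lra.
  intros s Hs. apply Hd'.
  apply Hd1'. apply Rlt_le_trans with (1 := Hs). apply Rmin_l.
  apply Hd2'. apply Rlt_le_trans with (1 := Hs). apply Rmin_r.
Qed.

Lemma solves_cont W phi t : solves W phi t -> cont_at phi t.
Proof.
  intros [H1 H2]. split.
  apply (ex_derive_continuous (K:=R_AbsRing) (V:=R_NormedModule)). eexists; exact H1.
  apply (ex_derive_continuous (K:=R_AbsRing) (V:=R_NormedModule)). eexists; exact H2.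
Qed.

Lemma solves_deriv W phi t : solves W phi t ->
  derivable_pt_lim (fun s => fst (phi s)) t (fst (W (phi t))) /\
  derivable_pt_lim (fun s => snd (phi s)) t (snd (W (phi t))).
Proof. intros [H1 H2]; split; apply is_derive_Reals; assumption. Qed.

Definition isC1 (f : pt -> R) : Prop :=
  (forall p : pt, ex_derive (fun x => f (x, snd p)) (fst p)
               /\ ex_derive (fun y => f (fst p, y)) (snd p)) /\
  (forall p, continuous f p) /\ (forall p, continuous (dx f) p) /\ (forall p, continuous (dy f) p).

Lemma smooth_C1 f : smooth f -> isC1 f.
Proof.
  intro H. destruct (H 1%nat) as [Hd [H1 H2]]. split. exact Hd.
  split. exact (H 0%nat). split; assumption.
Qed.

Lemma C1_px f (a : R) (y : R) : isC1 f -> is_derive (fun x => f (x, y)) a (dx f (a, y)).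
Proof.
  intros [Hd _]. destruct (Hd (a, y)) as [H _]. simpl in H.
  unfold dx. simpl. apply Derive_correct. exact H.
Qed.

Lemma C1_py f (x : R) (b : R) : isC1 f -> is_derive (fun y => f (x, y)) b (dy f (x, b)).
Proof.
  intros [Hd _]. destruct (Hd (x, b)) as [_ H]. simpl in H.
  unfold dy. simpl. apply Derive_correct. exact H.
Qed.

Lemma MVT_pt (f df : R -> R) a b : (forall x, Rmin a b <= x <= Rmax a b -> is_derive f x (df x)) ->
  exists c, Rmin a b <= c <= Rmax a b /\ f b - f a = df c * (b - a).
Proof.
  intros H. apply MVT_gen.
  intros x Hx. apply H. lra.
  intros x Hx. apply cont1_iff. apply (ex_derive_continuous (K:=R_AbsRing) (V:=R_NormedModule)). eexists. apply H. exact Hx.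
Qed.

Lemma Rmin_Rmax_abs a b c : Rmin a b <= c <= Rmax a b -> Rabs (c - a) <= Rabs (b - a).
Proof.
  intros H. unfold Rmin, Rmax in H. destruct (Rle_dec a b); unfold Rabs;
  destruct (Rcase_abs (c-a)); destruct (Rcase_abs (b-a)); lra.
Qed.

Lemma C1_lip f q : isC1 f -> exists r K, r > 0 /\ K >= 0 /\ forall a b,
  Rabs (fst a - fst q) < r -> Rabs (snd a - snd q) < r ->
  Rabs (fst b - fst q) < r -> Rabs (snd b - snd q) < r ->
  Rabs (f a - f b) <= K * (Rabs (fst a - fst b) + Rabs (snd a - snd b)).
Proof.
  intros HC. pose proof HC as [_ [_ [Hcx Hcy]]].
  destruct (cont2_eps _ q (Hcx q) 1 Rlt_0_1) as [d1 [Hd1 H1]].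
  destruct (cont2_eps _ q (Hcy q) 1 Rlt_0_1) as [d2 [Hd2 H2]].
  exists (Rmin d1 d2), (Rabs (dx f q) + Rabs (dy f q) + 1).
  split. apply Rmin_pos; lra. split. pose proof (Rabs_pos (dx f q)); pose proof (Rabs_pos (dy f q)); lra.
  intros [a1 a2] [b1 b2]; simpl; intros Ha1 Ha2 Hb1 Hb2.
  assert (Hm1 := Rmin_l d1 d2). assert (Hm2 := Rmin_r d1 d2).
  destruct (MVT_pt (fun x => f (x, a2)) (fun x => dx f (x, a2)) b1 a1) as [c1 [Hc1 E1]].
  { intros x _. apply C1_px. exact HC. }
  destruct (MVT_pt (fun y => f (b1, y)) (fun y => dy f (b1, y)) b2 a2) as [c2 [Hc2 E2]].
  { intros y _. apply C1_py. exact HC. }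
  assert (B1 : Rabs (dx f (c1, a2)) <= Rabs (dx f q) + 1).
  { assert (Rabs (dx f (c1, a2) - dx f q) < 1).
    { apply H1; simpl.
      revert Hc1; unfold Rmin, Rmax; destruct (Rle_dec b1 a1); intros;
      apply Rabs_lt_between'; apply Rabs_lt_between' in Ha1; apply Rabs_lt_between' in Hb1; lra.
      lra. }
    pose proof (Rabs_triang_inv (dx f (c1, a2)) (dx f q)). lra. }
  assert (B2 : Rabs (dy f (b1, c2)) <= Rabs (dy f q) + 1).
  { assert (Rabs (dy f (b1, c2) - dy f q) < 1).
    { apply H2; simpl. lra.
      revert Hc2; unfold Rmin, Rmax; destruct (Rle_dec b2 a2); intros;
      apply Rabs_lt_between'; apply Rabs_lt_between' in Ha2; apply Rabs_lt_between' in Hb2; lra. }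
    pose proof (Rabs_triang_inv (dy f (b1, c2)) (dy f q)). lra. }
  replace (f (a1, a2) - f (b1, b2)) with ((f (a1, a2) - f (b1, a2)) + (f (b1, a2) - f (b1, b2))) by ring.
  rewrite E1, E2.
  eapply Rle_trans. apply Rabs_triang. rewrite !Rabs_mult.
  pose proof (Rabs_pos (a1 - b1)). pose proof (Rabs_pos (a2 - b2)).
  pose proof (Rabs_pos (dx f q)). pose proof (Rabs_pos (dy f q)).
  apply Rle_trans with ((Rabs (dx f q) + 1) * Rabs (a1 - b1) + (Rabs (dy f q) + 1) * Rabs (a2 - b2)).
  apply Rplus_le_compat; apply Rmult_le_compat_r; lra.
  nra.
Qed.

Lemma between_abs a b c : Rmin a b <= c <= Rmax a b -> Rabs (c - a) <= Rabs (b - a).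
Proof. apply Rmin_Rmax_abs. Qed.

Lemma C1_diff f x y : isC1 f ->
  differentiable_pt_lim (fun u v => f (u, v)) x y (dx f (x, y)) (dy f (x, y)).
Proof.
  intros HC eps. pose proof HC as [_ [_ [Hcx Hcy]]].
  assert (He2 : eps / 2 > 0) by (pose proof (cond_pos eps); lra).
  destruct (cont2_eps _ (x, y) (Hcx (x, y)) _ He2) as [d1 [Hd1 H1]].
  destruct (cont2_eps _ (x, y) (Hcy (x, y)) _ He2) as [d2 [Hd2 H2]].
  exists (mkposreal _ (Rmin_pos _ _ Hd1 Hd2)). simpl. intros u v Hu Hv.
  assert (Hm1 := Rmin_l d1 d2). assert (Hm2 := Rmin_r d1 d2).
  destruct (MVT_pt (fun a => f (a, v)) (fun a => dx f (a, v)) x u) as [c1 [Hc1 E1]].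
  { intros a _. apply C1_px. exact HC. }
  destruct (MVT_pt (fun b => f (x, b)) (fun b => dy f (x, b)) y v) as [c2 [Hc2 E2]].
  { intros b _. apply C1_py. exact HC. }
  apply between_abs in Hc1. apply between_abs in Hc2.
  assert (B1 : Rabs (dx f (c1, v) - dx f (x, y)) < eps / 2).
  { apply H1; simpl. eapply Rle_lt_trans. exact Hc1. eapply Rlt_le_trans. exact Hu. exact Hm1. eapply Rlt_le_trans. exact Hv. exact Hm1. }
  assert (B2 : Rabs (dy f (x, c2) - dy f (x, y)) < eps / 2).
  { apply H2; simpl. rewrite Rminus_eq_0, Rabs_R0; lra. eapply Rle_lt_trans. exact Hc2. eapply Rlt_le_trans. exact Hv. exact Hm2. }
  replace (f (u, v) - f (x, y) - (dx f (x, y) * (u - x) + dy f (x, y) * (v - y))) with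
    ((f (u, v) - f (x, v)) - dx f (x, y) * (u - x) + ((f (x, v) - f (x, y)) - dy f (x, y) * (v - y))) by ring.
  rewrite E1, E2.
  replace (dx f (c1, v) * (u - x) - dx f (x, y) * (u - x)) with ((dx f (c1, v) - dx f (x, y)) * (u - x)) by ring.
  replace (dy f (x, c2) * (v - y) - dy f (x, y) * (v - y)) with ((dy f (x, c2) - dy f (x, y)) * (v - y)) by ring.
  eapply Rle_trans. apply Rabs_triang. rewrite !Rabs_mult.
  pose proof (Rabs_pos (u - x)). pose proof (Rabs_pos (v - y)).
  pose proof (Rmax_l (Rabs (u - x)) (Rabs (v - y))). pose proof (Rmax_r (Rabs (u - x)) (Rabs (v - y))).
  apply Rle_trans with (eps / 2 * Rabs (u - x) + eps / 2 * Rabs (v - y)).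
  apply Rplus_le_compat; apply Rmult_le_compat_r; lra.
  pose proof (cond_pos eps). nra.
Qed.

Lemma C1_chain f phi t l1 l2 : isC1 f ->
  derivable_pt_lim (fun s => fst (phi s)) t l1 ->
  derivable_pt_lim (fun s => snd (phi s)) t l2 ->
  derivable_pt_lim (fun s => f (phi s)) t (dx f (phi t) * l1 + dy f (phi t) * l2).
Proof.
  intros HC H1 H2.
  pose proof (derivable_pt_lim_comp_2d (fun u v => f (u, v)) (fun s => fst (phi s)) (fun s => snd (phi s))
    t _ _ _ _ (C1_diff f (fst (phi t)) (snd (phi t)) HC) H1 H2) as H.
  simpl in H.
  intros eps He. destruct (H eps He) as [d Hd]. exists d. intros h Hh Hh'.
  specialize (Hd h Hh Hh'). rewrite <- !surjective_pairing in Hd. exact Hd.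
Qed.

Lemma solves_chain f W phi t : isC1 f -> solves W phi t ->
  derivable_pt_lim (fun s => f (phi s)) t (lie W f (phi t)).
Proof.
  intros HC Hs. apply solves_deriv in Hs as [H1 H2].
  unfold lie. apply C1_chain; assumption.
Qed.

Lemma dmult f g x a b : derivable_pt_lim f x a -> derivable_pt_lim g x b ->
  derivable_pt_lim (fun s => f s * g s) x (a * g x + f x * b).
Proof. intros; exact (derivable_pt_lim_mult f g x a b H H0). Qed.
Lemma dplus f g x a b : derivable_pt_lim f x a -> derivable_pt_lim g x b ->
  derivable_pt_lim (fun s => f s + g s) x (a + b).
Proof. intros; exact (derivable_pt_lim_plus f g x a b H H0). Qed.
Lemma dminus f g x a b : derivable_pt_lim f x a -> derivable_pt_lim g x b ->
  derivable_pt_lim (fun s => f s - g s) x (a - b).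
Proof. intros; exact (derivable_pt_lim_minus f g x a b H H0). Qed.
Lemma dext f g x a : (forall s, f s = g s) -> derivable_pt_lim f x a -> derivable_pt_lim g x a.
Proof.
  intros E H eps He. destruct (H eps He) as [d Hd]. exists d. intros h H1 H2.
  rewrite <- !E. apply Hd; assumption.
Qed.
Lemma dlin c k x : derivable_pt_lim (fun s => c + k * s) x k.
Proof. apply is_derive_Reals. auto_derive. auto. ring. Qed.
Lemma dcompR f g x a b : derivable_pt_lim g x a -> derivable_pt_lim f (g x) b ->
  derivable_pt_lim (fun s => f (g s)) x (b * a).
Proof. intros; exact (derivable_pt_lim_comp g f x a b H H0). Qed.

Definition fieldC1 (W : pt -> pt) := isC1 (fun q => fst (W q)) /\ isC1 (fun q => snd (W q)).

Lemma deriv_punct (c dc : R -> R) t e : e > 0 -> continuity_pt c t -> continuity_pt dc t ->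
  (forall r, 0 < Rabs (r - t) < e -> derivable_pt_lim c r (dc r)) -> derivable_pt_lim c t (dc t).
Proof.
  intros He Hc Hdc Hd eps Heps.
  destruct (cpt_eps _ _ Hdc eps Heps) as [d [Hd0 Hd1]].
  assert (Hm : Rmin d e > 0) by (apply Rmin_pos; lra).
  exists (mkposreal _ Hm). simpl. intros h Hh0 Hh.
  pose proof (Rmin_l d e). pose proof (Rmin_r d e).
  destruct (MVT_gen c t (t + h) dc) as [xi [Hxi E]].
  { intros x Hx. apply is_derive_Reals. apply Hd.
    assert (Rabs (x - t) < Rabs h).
    { revert Hx. unfold Rmin, Rmax. destruct (Rle_dec t (t + h)); intros;
      unfold Rabs; destruct (Rcase_abs (x - t)); destruct (Rcase_abs h); lra. }
    split. apply Rabs_pos_lt. revert Hx. unfold Rmin, Rmax. destruct (Rle_dec t (t+h)); intros; lra. lra. }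
  { intros x Hx. destruct (Req_dec x t) as [->|Hne]. exact Hc.
    apply derivable_continuous_pt. exists (dc x). apply Hd.
    assert (Rabs (x - t) <= Rabs h).
    { revert Hx. unfold Rmin, Rmax. destruct (Rle_dec t (t + h)); intros;
      unfold Rabs; destruct (Rcase_abs (x - t)); destruct (Rcase_abs h); lra. }
    split. apply Rabs_pos_lt. lra. lra. }
  replace ((c (t + h) - c t) / h - dc t) with (dc xi - dc t).
  apply Hd1. assert (Rabs (xi - t) <= Rabs h).
  { revert Hxi. unfold Rmin, Rmax. destruct (Rle_dec t (t + h)); intros;
      unfold Rabs; destruct (Rcase_abs (xi - t)); destruct (Rcase_abs h); lra. }
  lra.
  rewrite E. replace (t + h - t) with h by ring. field. exact Hh0.
Qed.

Lemma W_cont W : fieldC1 W -> forall q, continuous (fun q => fst (W q)) q /\ continuous (fun q => snd (W q)) q.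
Proof. intros [[_ [H1 _]] [_ [H2 _]]] q. split; auto. Qed.

Lemma solve_punct W phi t e : fieldC1 W -> e > 0 -> cont_at phi t ->
  (forall r, 0 < Rabs (r - t) < e -> solves W phi r) -> solves W phi t.
Proof.
  intros HW He Hc Hs. pose proof Hc as Hc'. apply cont_at_iff in Hc' as [Hc1 Hc2].
  destruct (W_cont W HW (phi t)) as [Hw1 Hw2].
  split; apply is_derive_Reals.
  - apply (deriv_punct (fun s => fst (phi s)) (fun s => fst (W (phi s))) t e He Hc1).
    apply (comp_cpt (fun q => fst (W q))); assumption.
    intros r Hr. apply (solves_deriv W phi r (Hs r Hr)).
  - apply (deriv_punct (fun s => snd (phi s)) (fun s => snd (W (phi s))) t e He Hc2).
    apply (comp_cpt (fun q => snd (W q))); assumption.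
    intros r Hr. apply (solves_deriv W phi r (Hs r Hr)).
Qed.

Lemma real_induction (a b : R) (P : R -> Prop) : a <= b -> P a ->
  (forall t, a <= t < b -> (forall s, a <= s <= t -> P s) ->
     exists d, d > 0 /\ forall s, t < s < t + d -> s <= b -> P s) ->
  (forall t, a < t <= b -> (forall s, a <= s < t -> P s) -> P t) ->
  forall t, a <= t <= b -> P t.
Proof.
  intros Hab Ha Hloc Hcl.
  set (S := fun t => a <= t <= b /\ forall s, a <= s <= t -> P s).
  assert (Hb : bound S). { exists b. intros x [Hx _]. lra. }
  assert (Hne : exists x, S x). { exists a. split. lra. intros s Hs. replace s with a by lra. exact Ha. }
  destruct (completeness S Hb Hne) as [m [Hm1 Hm2]].
  assert (Ham : a <= m). { apply Hm1. split. lra. intros s Hs. replace s with a by lra. exact Ha. }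
  assert (Hmb : m <= b). { apply Hm2. intros x [Hx _]. lra. }
  assert (Hbelow : forall s, a <= s < m -> P s).
  { intros s Hs. destruct (classic (exists t, S t /\ s < t)) as [[t [[Ht1 Ht2] Ht3]]|Hn].
    apply Ht2. lra.
    exfalso. assert (m <= s). { apply Hm2. intros x Hx. apply Rnot_lt_le. intro. apply Hn. exists x. tauto. }
    lra. }
  assert (HPm : forall s, a <= s <= m -> P s).
  { intros s Hs. destruct (Req_dec s m) as [->|Hne'].
    destruct (Req_dec m a) as [->|Hma]. exact Ha. apply Hcl. lra. exact Hbelow.
    apply Hbelow. lra. }
  destruct (Req_dec m b) as [Emb|Hmb'].
  - intros t Ht. apply HPm. lra.
  - exfalso. destruct (Hloc m ltac:(split; [exact Ham | destruct Hmb; [assumption | contradiction]]) HPm) as [d [Hd Hd']].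
    set (t' := Rmin (m + d / 2) b).
    assert (m < t'). { unfold t', Rmin. destruct (Rle_dec (m + d/2) b); lra. }
    assert (t' <= b) by apply Rmin_r. assert (t' <= m + d/2) by apply Rmin_l.
    assert (S t'). { split. lra. intros s Hs. destruct (Rle_dec s m). apply HPm; lra. apply Hd'; lra. }
    specialize (Hm1 t' H2). lra.
Qed.

Lemma real_induction_bwd (a b : R) (P : R -> Prop) : a <= b -> P b ->
  (forall t, a < t <= b -> (forall s, t <= s <= b -> P s) ->
     exists d, d > 0 /\ forall s, t - d < s < t -> a <= s -> P s) ->
  (forall t, a <= t < b -> (forall s, t < s <= b -> P s) -> P t) ->
  forall t, a <= t <= b -> P t.
Proof.
  intros Hab Hb Hloc Hcl t Ht.
  replace t with (- - t) by ring.
  apply (real_induction (-b) (-a) (fun u => P (- u))); try lra.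
  - rewrite Ropp_involutive. exact Hb.
  - intros u Hu Hs. destruct (Hloc (-u)) as [d [Hd Hd']]. lra.
    intros s Hs'. replace s with (- - s) by ring. apply Hs. lra.
    exists d. split. exact Hd. intros s Hs1 Hs2. apply Hd'; lra.
  - intros u Hu Hs. apply Hcl. lra. intros s Hs'. replace s with (- - s) by ring. apply Hs. lra.
Qed.

Lemma eq_closure_left (f1 f2 : R -> pt) a t : a < t -> cont_at f1 t -> cont_at f2 t ->
  (forall s, a <= s < t -> f1 s = f2 s) -> f1 t = f2 t.
Proof.
  intros Hat H1 H2 Hs. apply cont_at_iff in H1 as [H11 H12]. apply cont_at_iff in H2 as [H21 H22].
  assert (K : forall (u v : R -> R), continuity_pt u t -> continuity_pt v t ->
             (forall s, a <= s < t -> u s = v s) -> u t = v t).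
  { intros u v Hu Hv Huv. apply NNPP. intro Hne.
    assert (Hpos : Rabs (u t - v t) / 2 > 0).
    { assert (u t - v t <> 0) by lra. pose proof (Rabs_pos_lt _ H). lra. }
    destruct (cpt_eps _ _ Hu _ Hpos) as [d1 [Hd1 Hd1']].
    destruct (cpt_eps _ _ Hv _ Hpos) as [d2 [Hd2 Hd2']].
    set (s := Rmax a (t - Rmin d1 d2 / 2)).
    assert (Hm := Rmin_pos _ _ Hd1 Hd2). pose proof (Rmin_l d1 d2). pose proof (Rmin_r d1 d2).
    assert (Hs1 : a <= s < t). { unfold s, Rmax. destruct (Rle_dec a (t - Rmin d1 d2 / 2)); lra. }
    assert (Hs2 : Rabs (s - t) < Rmin d1 d2).
    { unfold s, Rmax. destruct (Rle_dec a (t - Rmin d1 d2 / 2)); rewrite Rabs_left; lra. }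
    specialize (Hd1' s ltac:(lra)). specialize (Hd2' s ltac:(lra)). rewrite (Huv s Hs1) in Hd1'.
    pose proof (Rabs_triang (v s - u t) (v t - v s)) as Htr.
    replace (v s - u t + (v t - v s)) with (- (u t - v t)) in Htr by ring. rewrite Rabs_Ropp in Htr.
    rewrite <- Rabs_Ropp in Hd2'. replace (- (v s - v t)) with (v t - v s) in Hd2' by ring. lra. }
  rewrite (surjective_pairing (f1 t)), (surjective_pairing (f2 t)).
  f_equal.
  apply (K (fun s => fst (f1 s)) (fun s => fst (f2 s))); auto; intros s Hs'; rewrite (Hs s Hs'); reflexivity.
  apply (K (fun s => snd (f1 s)) (fun s => snd (f2 s))); auto; intros s Hs'; rewrite (Hs s Hs'); reflexivity.
Qed.

Lemma eq_closure_right (f1 f2 : R -> pt) b t : t < b -> cont_at f1 t -> cont_at f2 t ->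
  (forall s, t < s <= b -> f1 s = f2 s) -> f1 t = f2 t.
Proof.
  intros Htb H1 H2 Hs.
  assert (Hr : forall f : R -> pt, cont_at f t -> cont_at (fun u => f (- u)) (- t)).
  { intros f Hf. apply cont_at_iff in Hf as [Ha Hb]. apply cont_at_iff. split.
    - apply (continuity_pt_comp (fun u => - u) (fun s => fst (f s))). apply continuity_pt_opp, continuity_pt_id.
      rewrite Ropp_involutive. exact Ha.
    - apply (continuity_pt_comp (fun u => - u) (fun s => snd (f s))). apply continuity_pt_opp, continuity_pt_id.
      rewrite Ropp_involutive. exact Hb. }
  pose proof (eq_closure_left (fun u => f1 (- u)) (fun u => f2 (- u)) (- b) (- t) ltac:(lra) (Hr _ H1) (Hr _ H2)) as K.
  simpl in K. rewrite Ropp_involutive in K. apply K. intros s Hs'. apply Hs. lra.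
Qed.

Definition LocLip (W : pt -> pt) : Prop := forall q, exists r K, r > 0 /\ K >= 0 /\ forall a b,
  Rabs (fst a - fst q) < r -> Rabs (snd a - snd q) < r ->
  Rabs (fst b - fst q) < r -> Rabs (snd b - snd q) < r ->
  Rabs (fst (W a) - fst (W b)) <= K * (Rabs (fst a - fst b) + Rabs (snd a - snd b)) /\
  Rabs (snd (W a) - snd (W b)) <= K * (Rabs (fst a - fst b) + Rabs (snd a - snd b)).

Lemma fieldC1_LocLip W : fieldC1 W -> LocLip W.
Proof.
  intros [H1 H2] q.
  destruct (C1_lip _ q H1) as [r1 [K1 [Hr1 [HK1 L1]]]].
  destruct (C1_lip _ q H2) as [r2 [K2 [Hr2 [HK2 L2]]]].
  exists (Rmin r1 r2), (K1 + K2). split. apply Rmin_pos; lra. split. lra.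
  pose proof (Rmin_l r1 r2). pose proof (Rmin_r r1 r2).
  intros a b Ha1 Ha2 Hb1 Hb2.
  pose proof (Rabs_pos (fst a - fst b)). pose proof (Rabs_pos (snd a - snd b)).
  split.
  - eapply Rle_trans. apply L1; lra. nra.
  - eapply Rle_trans. apply L2; lra. nra.
Qed.

Definition negW (W : pt -> pt) : pt -> pt := fun q => (- fst (W q), - snd (W q)).

Lemma LocLip_neg W : LocLip W -> LocLip (negW W).
Proof.
  intros H q. destruct (H q) as [r [K [Hr [HK L]]]]. exists r, K. split. exact Hr. split. exact HK.
  intros a b Ha1 Ha2 Hb1 Hb2. unfold negW; simpl.
  replace (- fst (W a) - - fst (W b)) with (- (fst (W a) - fst (W b))) by ring.
  replace (- snd (W a) - - snd (W b)) with (- (snd (W a) - snd (W b))) by ring.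
  rewrite !Rabs_Ropp. apply L; assumption.
Qed.

Lemma ccomb_mult f g x : continuity_pt f x -> continuity_pt g x -> continuity_pt (fun s => f s * g s) x.
Proof. intros; exact (continuity_pt_mult f g x H H0). Qed.
Lemma ccomb_plus f g x : continuity_pt f x -> continuity_pt g x -> continuity_pt (fun s => f s + g s) x.
Proof. intros; exact (continuity_pt_plus f g x H H0). Qed.
Lemma ccomb_minus f g x : continuity_pt f x -> continuity_pt g x -> continuity_pt (fun s => f s - g s) x.
Proof. intros; exact (continuity_pt_minus f g x H H0). Qed.

Lemma key_ineq d1 d2 w1 w2 K1 K2 : K1 >= 0 -> K2 >= 0 ->
  Rabs w1 <= K1 * (Rabs d1 + Rabs d2) -> Rabs w2 <= K2 * (Rabs d1 + Rabs d2) ->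
  2 * d1 * w1 + 2 * d2 * w2 <= 4 * (K1 + K2) * (d1 * d1 + d2 * d2).
Proof.
  intros HK1 HK2 H1 H2.
  assert (E1 : d1 * w1 <= Rabs d1 * Rabs w1) by (rewrite <- Rabs_mult; apply Rle_abs).
  assert (E2 : d2 * w2 <= Rabs d2 * Rabs w2) by (rewrite <- Rabs_mult; apply Rle_abs).
  assert (A1 : Rabs d1 * Rabs d1 = d1 * d1) by (rewrite <- Rabs_mult; apply Rabs_pos_eq; nra).
  assert (A2 : Rabs d2 * Rabs d2 = d2 * d2) by (rewrite <- Rabs_mult; apply Rabs_pos_eq; nra).
  pose proof (Rabs_pos d1). pose proof (Rabs_pos d2).
  assert (Rabs d1 * Rabs w1 <= Rabs d1 * (K1 * (Rabs d1 + Rabs d2))) by (apply Rmult_le_compat_l; lra).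
  assert (Rabs d2 * Rabs w2 <= Rabs d2 * (K2 * (Rabs d1 + Rabs d2))) by (apply Rmult_le_compat_l; lra).
  assert (Rabs d1 * (K1 * (Rabs d1 + Rabs d2)) + Rabs d2 * (K2 * (Rabs d1 + Rabs d2))
          <= (K1 + K2) * (2 * (Rabs d1 * Rabs d1 + Rabs d2 * Rabs d2))).
  { set (a := Rabs d1) in *. set (b := Rabs d2) in *.
    pose proof (Rle_0_sqr (a - b / 2)). pose proof (Rle_0_sqr (b - a / 2)). unfold Rsqr in *.
    assert (0 <= K1 * (2 * (a * a + b * b) - a * (a + b))).
    { apply Rmult_le_pos. lra. nra. }
    assert (0 <= K2 * (2 * (a * a + b * b) - b * (a + b))).
    { apply Rmult_le_pos. lra. nra. }
    lra. }
  rewrite A1, A2 in H5. lra.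
Qed.

Lemma loc_uniq_fwd W phi1 phi2 c b : LocLip W -> c < b ->
  (forall t, c <= t <= b -> cont_at phi1 t /\ cont_at phi2 t) ->
  (forall t, c < t < b -> solves W phi1 t /\ solves W phi2 t) ->
  phi1 c = phi2 c ->
  exists d, d > 0 /\ forall t, c <= t <= b -> t < c + d -> phi1 t = phi2 t.
Proof.
  intros HL Hcb Hc Hs E0.
  destruct (HL (phi1 c)) as [r [K [Hr [HK Lip]]]].
  destruct (Hc c ltac:(lra)) as [Hc1 Hc2].
  apply cont_at_iff in Hc1 as [Hc11 Hc12]. apply cont_at_iff in Hc2 as [Hc21 Hc22].
  destruct (cpt_eps _ _ Hc11 r Hr) as [d1 [Hd1 Hd1']].
  destruct (cpt_eps _ _ Hc12 r Hr) as [d2 [Hd2 Hd2']].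
  destruct (cpt_eps _ _ Hc21 r Hr) as [d3 [Hd3 Hd3']].
  destruct (cpt_eps _ _ Hc22 r Hr) as [d4 [Hd4 Hd4']].
  set (d := Rmin (Rmin d1 d2) (Rmin d3 d4)).
  assert (Hd : d > 0) by (unfold d; repeat apply Rmin_pos; lra).
  assert (Hdd : d <= d1 /\ d <= d2 /\ d <= d3 /\ d <= d4).
  { unfold d. pose proof (Rmin_l (Rmin d1 d2) (Rmin d3 d4)). pose proof (Rmin_r (Rmin d1 d2) (Rmin d3 d4)).
    pose proof (Rmin_l d1 d2). pose proof (Rmin_r d1 d2). pose proof (Rmin_l d3 d4). pose proof (Rmin_r d3 d4). lra. }
  exists d. split. exact Hd. intros t Ht Htd.
  destruct (Req_dec t c) as [->|Htc]. exact E0.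
  set (D1 := fun s => fst (phi1 s) - fst (phi2 s)).
  set (D2 := fun s => snd (phi1 s) - snd (phi2 s)).
  set (w1 := fun s => fst (W (phi1 s)) - fst (W (phi2 s))).
  set (w2 := fun s => snd (W (phi1 s)) - snd (W (phi2 s))).
  set (k := 8 * K).
  set (E := fun s => exp (- k * s) * (D1 s * D1 s + D2 s * D2 s)).
  set (dE := fun s => exp (- k * s) * ((2 * D1 s * w1 s + 2 * D2 s * w2 s) - k * (D1 s * D1 s + D2 s * D2 s))).
  assert (Hin : forall s, c <= s <= t ->
    Rabs (fst (phi1 s) - fst (phi1 c)) < r /\ Rabs (snd (phi1 s) - snd (phi1 c)) < r /\
    Rabs (fst (phi2 s) - fst (phi1 c)) < r /\ Rabs (snd (phi2 s) - snd (phi1 c)) < r).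
  { intros s Hs0. assert (Rabs (s - c) < d) by (rewrite Rabs_pos_eq; lra).
    rewrite E0 at 3 4. repeat split. apply Hd1'; lra. apply Hd2'; lra. apply Hd3'; lra. apply Hd4'; lra. }
  assert (HdE : forall s, c <= s <= t -> dE s <= 0).
  { intros s Hs0. destruct (Hin s Hs0) as [A1 [A2 [A3 A4]]].
    destruct (Lip (phi1 s) (phi2 s) A1 A2 A3 A4) as [L1 L2].
    unfold dE. assert (exp (- k * s) > 0) by apply exp_pos.
    assert (2 * D1 s * w1 s + 2 * D2 s * w2 s <= 4 * (K + K) * (D1 s * D1 s + D2 s * D2 s))
      by (apply key_ineq; assumption).
    assert (Hk : k = 8 * K) by reflexivity. assert (0 <= D1 s * D1 s + D2 s * D2 s) by nra.
    apply Rmult_le_0_l. lra. rewrite Hk. lra. }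
  destruct (MVT_gen E c t dE) as [xi [Hxi EM]].
  { rewrite Rmin_left, Rmax_right by lra. intros x Hx. apply is_derive_Reals.
    destruct (Hs x ltac:(lra)) as [S1 S2]. apply solves_deriv in S1 as [S11 S12]. apply solves_deriv in S2 as [S21 S22].
    assert (G1 : derivable_pt_lim D1 x (fst (W (phi1 x)) - fst (W (phi2 x)))) by (apply dminus; assumption).
    assert (G2 : derivable_pt_lim D2 x (snd (W (phi1 x)) - snd (W (phi2 x)))) by (apply dminus; assumption).
    assert (Gexp : derivable_pt_lim (fun s => exp (- k * s)) x (exp (- k * x) * (- k))).
    { apply (dcompR exp (fun s => - k * s)). apply is_derive_Reals. auto_derive. auto. ring. apply derivable_pt_lim_exp. }
    pose proof (dmult _ _ x _ _ Gexp (dplus _ _ x _ _ (dmult _ _ x _ _ G1 G1) (dmult _ _ x _ _ G2 G2))) as G.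
    unfold E, dE, w1, w2. simpl in G.
    replace (exp (- k * x) * (2 * D1 x * (fst (W (phi1 x)) - fst (W (phi2 x))) + 2 * D2 x * (snd (W (phi1 x)) - snd (W (phi2 x))) -
      k * (D1 x * D1 x + D2 x * D2 x))) with
      (exp (- k * x) * - k * (D1 x * D1 x + D2 x * D2 x) +
       exp (- k * x) * ((fst (W (phi1 x)) - fst (W (phi2 x))) * D1 x + D1 x * (fst (W (phi1 x)) - fst (W (phi2 x))) +
         ((snd (W (phi1 x)) - snd (W (phi2 x))) * D2 x + D2 x * (snd (W (phi1 x)) - snd (W (phi2 x)))))) by ring.
    exact G. }
  { rewrite Rmin_left, Rmax_right by lra. intros x Hx.
    destruct (Hc x ltac:(lra)) as [C1 C2]. apply cont_at_iff in C1 as [C11 C12]. apply cont_at_iff in C2 as [C21 C22].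
    unfold E. apply ccomb_mult.
    apply (continuity_pt_comp (fun s => - k * s) exp). apply derivable_continuous_pt. exists (-k). apply is_derive_Reals. auto_derive. auto. ring.
    apply derivable_continuous_pt. exists (exp (- k * x)). apply derivable_pt_lim_exp.
    unfold D1, D2. apply ccomb_plus; apply ccomb_mult; apply ccomb_minus; assumption. }
  rewrite Rmin_left, Rmax_right in Hxi by lra.
  assert (Ec : E c = 0). { unfold E, D1, D2. rewrite E0. ring. }
  assert (Et : E t <= 0). { rewrite Ec in EM. specialize (HdE xi Hxi). nra. }
  assert (Hex : exp (- k * t) > 0) by apply exp_pos.
  unfold E in Et.
  assert (Z : D1 t * D1 t + D2 t * D2 t = 0).
  { assert (0 <= D1 t * D1 t + D2 t * D2 t) by nra. nra. }
  assert (D1 t = 0) by nra. assert (D2 t = 0) by nra.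
  unfold D1, D2 in *. rewrite (surjective_pairing (phi1 t)), (surjective_pairing (phi2 t)). f_equal; lra.
Qed.

Lemma uniq_fwd W phi1 phi2 a b : LocLip W -> a <= b ->
  (forall t, a <= t <= b -> cont_at phi1 t /\ cont_at phi2 t) ->
  (forall t, a < t < b -> solves W phi1 t /\ solves W phi2 t) ->
  phi1 a = phi2 a -> forall t, a <= t <= b -> phi1 t = phi2 t.
Proof.
  intros HL Hab Hc Hs E0.
  apply real_induction. exact Hab. exact E0.
  - intros t Ht HP. destruct (loc_uniq_fwd W phi1 phi2 t b HL ltac:(lra)) as [d [Hd Hd']].
    intros s Hs'. apply Hc. lra. intros s Hs'. apply Hs. lra. apply HP. lra.
    exists d. split. exact Hd. intros s Hs1 Hs2. apply Hd'; lra.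
  - intros t Ht HP. apply (eq_closure_left _ _ a). lra. apply Hc; lra. apply Hc; lra. exact HP.
Qed.

Lemma solves_rev W phi t : solves W phi t -> solves (negW W) (fun u => phi (- u)) (- t).
Proof.
  intros [H1 H2]. unfold solves, negW. simpl. rewrite Ropp_involutive.
  assert (Hd : is_derive (fun u : R => - u) (- t) (-1)).
  { apply is_derive_Reals. apply dext with (fun s => 0 + -1 * s). intro; ring. apply dlin. }
  split.
  - replace (- fst (W (phi t))) with (scal (-1) (fst (W (phi t)))).
    apply (is_derive_comp (fun s => fst (phi s)) (fun u => - u)). rewrite Ropp_involutive. exact H1. exact Hd.
    unfold scal; simpl; unfold mult; simpl. ring.
  - replace (- snd (W (phi t))) with (scal (-1) (snd (W (phi t)))).
    apply (is_derive_comp (fun s => snd (phi s)) (fun u => - u)). rewrite Ropp_involutive. exact H2. exact Hd.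
    unfold scal; simpl; unfold mult; simpl. ring.
Qed.

Lemma cont_at_rev phi t : cont_at phi t -> cont_at (fun u => phi (- u)) (- t).
Proof.
  intros Hf. apply cont_at_iff in Hf as [Ha Hb]. apply cont_at_iff. split.
  - apply (continuity_pt_comp (fun u => - u) (fun s => fst (phi s))). apply continuity_pt_opp, continuity_pt_id.
    rewrite Ropp_involutive. exact Ha.
  - apply (continuity_pt_comp (fun u => - u) (fun s => snd (phi s))). apply continuity_pt_opp, continuity_pt_id.
    rewrite Ropp_involutive. exact Hb.
Qed.

Lemma uniq_bwd W phi1 phi2 a b : LocLip W -> a <= b ->
  (forall t, a <= t <= b -> cont_at phi1 t /\ cont_at phi2 t) ->
  (forall t, a < t < b -> solves W phi1 t /\ solves W phi2 t) ->
  phi1 b = phi2 b -> forall t, a <= t <= b -> phi1 t = phi2 t.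
Proof.
  intros HL Hab Hc Hs E0 t Ht.
  pose proof (uniq_fwd (negW W) (fun u => phi1 (- u)) (fun u => phi2 (- u)) (- b) (- a) (LocLip_neg W HL)
    ltac:(lra)) as U.
  replace t with (- - t) by ring. apply U.
  - intros u Hu. destruct (Hc (- u) ltac:(lra)) as [C1 C2].
    split; replace u with (- - u) by ring; apply cont_at_rev; assumption.
  - intros u Hu. destruct (Hs (- u) ltac:(lra)) as [C1 C2].
    split; replace u with (- - u) by ring; apply solves_rev; assumption.
  - simpl. rewrite Ropp_involutive. exact E0.
  - lra.
Qed.

Lemma Z_facts Z : is_psvf Z -> isC1 (sw Z) /\ fieldC1 (fX Z) /\ fieldC1 (fY Z).
Proof.
  intros [Hs [[Hx1 Hx2] [[Hy1 Hy2] _]]]. split; [|split; split]; apply smooth_C1; assumption.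
Qed.

Lemma g_cont Z g : global_traj Z g -> forall t, cont_at g t.
Proof.
  intros Hg t. destruct (Hg t) as [e [He [_ Hp]]].
  destruct Hp as [[_ [H _]]|[[_ [H _]]|[_ [H _]]]]; apply H; lra.
Qed.

Lemma fcomp_cpt f phi t : isC1 f -> cont_at phi t -> continuity_pt (fun s => f (phi s)) t.
Proof. intros [_ [Hc _]] H. apply comp_cpt; auto. Qed.

Lemma lie_cpt f W phi t : isC1 f -> fieldC1 W -> cont_at phi t ->
  continuity_pt (fun s => lie W f (phi s)) t.
Proof.
  intros [_ [_ [Hx Hy]]] HW Hc. destruct (W_cont W HW (phi t)) as [H1 H2].
  unfold lie. apply ccomb_plus; apply ccomb_mult.
  apply (comp_cpt (dx f)); auto. apply (comp_cpt (fun q => fst (W q))); auto.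
  apply (comp_cpt (dy f)); auto. apply (comp_cpt (fun q => snd (W q))); auto.
Qed.

Lemma piece_pos Z g a b : piece Z g a b -> (exists r, a < r < b /\ sw Z (g r) > 0) -> Xpiece Z g a b.
Proof.
  intros [H|[[_ [H _]]|[_ [_ H]]]] [r [Hr Hs]]. exact H.
  destruct (H r ltac:(lra)) as [_ H']. lra.
  destruct (H r Hr) as [[Hi _] _]. unfold in_Sigma in Hi. lra.
Qed.

Lemma piece_neg Z g a b : piece Z g a b -> (exists r, a < r < b /\ sw Z (g r) < 0) -> Ypiece Z g a b.
Proof.
  intros [[_ [H _]]|[H|[_ [_ H]]]] [r [Hr Hs]].
  destruct (H r ltac:(lra)) as [_ H']. lra. exact H.
  destruct (H r Hr) as [[Hi _] _]. unfold in_Sigma in Hi. lra.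
Qed.

Lemma sw_g_cpt Z g : is_psvf Z -> global_traj Z g -> forall t, continuity_pt (fun s => sw Z (g s)) t.
Proof. intros HZ Hg t. apply fcomp_cpt. exact (proj1 (Z_facts Z HZ)). apply (g_cont Z g Hg). Qed.

Lemma sign_near (f : R -> R) t : continuity_pt f t -> f t > 0 -> exists d, d > 0 /\ forall r, Rabs (r - t) < d -> f r > 0.
Proof.
  intros H Hp. destruct (cpt_eps f t H (f t) Hp) as [d [Hd Hd']]. exists d. split. exact Hd.
  intros r Hr. specialize (Hd' r Hr). apply Rabs_lt_between' in Hd'. lra.
Qed.

Lemma sign_near_neg (f : R -> R) t : continuity_pt f t -> f t < 0 -> exists d, d > 0 /\ forall r, Rabs (r - t) < d -> f r < 0.
Proof.
  intros H Hp. destruct (cpt_eps f t H (- f t) ltac:(lra)) as [d [Hd Hd']]. exists d. split. exact Hd.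
  intros r Hr. specialize (Hd' r Hr). apply Rabs_lt_between' in Hd'. lra.
Qed.

Lemma pos_solves Z g t : is_psvf Z -> global_traj Z g -> sw Z (g t) > 0 ->
  exists e, e > 0 /\ forall r, t - e < r < t + e -> solves (fX Z) g r.
Proof.
  intros HZ Hg Hp. destruct (sign_near _ t (sw_g_cpt Z g HZ Hg t) Hp) as [d [Hd Hd']].
  exists (d / 2). split. lra. intros r Hr.
  destruct (Hg r) as [e [He [Hl Hr']]].
  set (m := Rmin e (d / 4)).
  assert (Hm : m > 0) by (unfold m; apply Rmin_pos; lra).
  assert (Hm1 : m <= e) by apply Rmin_l. assert (Hm2 : m <= d / 4) by apply Rmin_r.
  assert (XL : Xpiece Z g (r - e) r).
  { apply piece_pos. exact Hl. exists (r - m / 2). split. lra. apply Hd'.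
    apply Rabs_lt_between'. lra. }
  assert (XR : Xpiece Z g r (r + e)).
  { apply piece_pos. exact Hr'. exists (r + m / 2). split. lra. apply Hd'.
    apply Rabs_lt_between'. lra. }
  destruct XL as [_ [_ SL]]. destruct XR as [_ [_ SR]].
  apply (solve_punct _ _ r e). exact (proj1 (proj2 (Z_facts Z HZ))). exact He. apply (g_cont Z g Hg).
  intros r' [Hr0 Hr1]. apply Rabs_lt_between' in Hr1 as Hb. destruct (Rlt_le_dec r' r).
  apply SL; lra. destruct (Req_dec r' r) as [->|]. rewrite Rminus_eq_0, Rabs_R0 in Hr0. lra. apply SR; lra.
Qed.

Lemma neg_solves Z g t : is_psvf Z -> global_traj Z g -> sw Z (g t) < 0 ->
  exists e, e > 0 /\ forall r, t - e < r < t + e -> solves (fY Z) g r.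
Proof.
  intros HZ Hg Hp. destruct (sign_near_neg _ t (sw_g_cpt Z g HZ Hg t) Hp) as [d [Hd Hd']].
  exists (d / 2). split. lra. intros r Hr.
  destruct (Hg r) as [e [He [Hl Hr']]].
  set (m := Rmin e (d / 4)).
  assert (Hm : m > 0) by (unfold m; apply Rmin_pos; lra).
  assert (Hm1 : m <= e) by apply Rmin_l. assert (Hm2 : m <= d / 4) by apply Rmin_r.
  assert (XL : Ypiece Z g (r - e) r).
  { apply piece_neg. exact Hl. exists (r - m / 2). split. lra. apply Hd'.
    apply Rabs_lt_between'. lra. }
  assert (XR : Ypiece Z g r (r + e)).
  { apply piece_neg. exact Hr'. exists (r + m / 2). split. lra. apply Hd'.
    apply Rabs_lt_between'. lra. }
  destruct XL as [_ [_ SL]]. destruct XR as [_ [_ SR]].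
  apply (solve_punct _ _ r e). exact (proj2 (proj2 (Z_facts Z HZ))). exact He. apply (g_cont Z g Hg).
  intros r' [Hr0 Hr1]. apply Rabs_lt_between' in Hr1 as Hb. destruct (Rlt_le_dec r' r).
  apply SL; lra. destruct (Req_dec r' r) as [->|]. rewrite Rminus_eq_0, Rabs_R0 in Hr0. lra. apply SR; lra.
Qed.

Lemma prod_pos_of_close l c : Rabs (l - c) < Rabs c -> l * c > 0.
Proof.
  intros H. apply Rabs_lt_between' in H.
  destruct (Rle_dec 0 c).
  - rewrite Rabs_pos_eq in H by lra. assert (c > 0) by lra. apply Rmult_lt_0_compat; lra.
  - rewrite Rabs_left in H by lra. replace (l * c) with ((- l) * (- c)) by ring. apply Rmult_lt_0_compat; lra.
Qed.

Lemma sign_right f W phi t e : isC1 f -> fieldC1 W -> e > 0 ->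
  (forall r, t <= r <= t + e -> cont_at phi r) -> (forall r, t < r < t + e -> solves W phi r) ->
  f (phi t) = 0 -> lie W f (phi t) <> 0 ->
  exists d, d > 0 /\ forall r, t < r < t + d -> f (phi r) * lie W f (phi t) > 0.
Proof.
  intros Hf HW He Hc Hs H0 Hne. set (c := lie W f (phi t)).
  assert (Hcp : Rabs c > 0) by (apply Rabs_pos_lt; exact Hne).
  destruct (cpt_eps _ _ (lie_cpt f W phi t Hf HW (Hc t ltac:(lra))) _ Hcp) as [d1 [Hd1 Hd1']].
  exists (Rmin d1 e). split. apply Rmin_pos; lra. intros r Hr.
  pose proof (Rmin_l d1 e). pose proof (Rmin_r d1 e).
  destruct (MVT_gen (fun s => f (phi s)) t r (fun s => lie W f (phi s))) as [xi [Hxi E]].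
  { rewrite Rmin_left, Rmax_right by lra. intros x Hx. apply is_derive_Reals.
    apply solves_chain. exact Hf. apply Hs. lra. }
  { rewrite Rmin_left, Rmax_right by lra. intros x Hx. apply fcomp_cpt. exact Hf. apply Hc. lra. }
  rewrite Rmin_left, Rmax_right in Hxi by lra. simpl in E. rewrite H0 in E.
  assert (Hl : lie W f (phi xi) * c > 0).
  { assert (Hxd : Rabs (xi - t) < d1) by (rewrite Rabs_pos_eq; lra).
    specialize (Hd1' xi Hxd). fold c in Hd1'.
    apply prod_pos_of_close. exact Hd1'. }
  replace (f (phi r)) with (lie W f (phi xi) * (r - t)) by lra. fold c.
  replace (lie W f (phi xi) * (r - t) * c) with ((lie W f (phi xi) * c) * (r - t)) by ring.
  apply Rmult_lt_0_compat; lra.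
Qed.

Lemma sign_left f W phi t e : isC1 f -> fieldC1 W -> e > 0 ->
  (forall r, t - e <= r <= t -> cont_at phi r) -> (forall r, t - e < r < t -> solves W phi r) ->
  f (phi t) = 0 -> lie W f (phi t) <> 0 ->
  exists d, d > 0 /\ forall r, t - d < r < t -> f (phi r) * lie W f (phi t) < 0.
Proof.
  intros Hf HW He Hc Hs H0 Hne. set (c := lie W f (phi t)).
  assert (Hcp : Rabs c > 0) by (apply Rabs_pos_lt; exact Hne).
  destruct (cpt_eps _ _ (lie_cpt f W phi t Hf HW (Hc t ltac:(lra))) _ Hcp) as [d1 [Hd1 Hd1']].
  exists (Rmin d1 e). split. apply Rmin_pos; lra. intros r Hr.
  pose proof (Rmin_l d1 e). pose proof (Rmin_r d1 e).
  destruct (MVT_gen (fun s => f (phi s)) r t (fun s => lie W f (phi s))) as [xi [Hxi E]].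
  { rewrite Rmin_left, Rmax_right by lra. intros x Hx. apply is_derive_Reals.
    apply solves_chain. exact Hf. apply Hs. lra. }
  { rewrite Rmin_left, Rmax_right by lra. intros x Hx. apply fcomp_cpt. exact Hf. apply Hc. lra. }
  rewrite Rmin_left, Rmax_right in Hxi by lra. simpl in E. rewrite H0 in E.
  assert (Hl : lie W f (phi xi) * c > 0).
  { assert (Hxd : Rabs (xi - t) < d1) by (rewrite Rabs_left1; lra).
    specialize (Hd1' xi Hxd). fold c in Hd1'.
    apply prod_pos_of_close. exact Hd1'. }
  replace (f (phi r)) with (- (lie W f (phi xi) * (t - r))) by lra. fold c.
  replace (- (lie W f (phi xi) * (t - r)) * c) with (- ((lie W f (phi xi) * c) * (t - r))) by ring.
  assert (0 < lie W f (phi xi) * c * (t - r)) by (apply Rmult_lt_0_compat; lra). lra.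
Qed.

Definition Xtype Z g t := exists e, e > 0 /\ Xpiece Z g (t - e) t /\ Xpiece Z g t (t + e).
Definition Ytype Z g t := exists e, e > 0 /\ Ypiece Z g (t - e) t /\ Ypiece Z g t (t + e).

Lemma passes_XY Z g t : passes_through Z g t -> Xtype Z g t \/ Ytype Z g t.
Proof. intros [e [He [[H1 H2]|[H1 H2]]]]; [left|right]; exists e; auto. Qed.

Lemma swC Z : is_psvf Z -> isC1 (sw Z).
Proof. intro H. exact (proj1 (Z_facts Z H)). Qed.
Lemma XC Z : is_psvf Z -> fieldC1 (fX Z).
Proof. intro H. exact (proj1 (proj2 (Z_facts Z H))). Qed.
Lemma YC Z : is_psvf Z -> fieldC1 (fY Z).
Proof. intro H. exact (proj2 (proj2 (Z_facts Z H))). Qed.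

Lemma Xtype_solves Z g t : is_psvf Z -> global_traj Z g -> Xtype Z g t ->
  exists e, e > 0 /\ forall r, t - e < r < t + e -> solves (fX Z) g r.
Proof.
  intros HZ Hg [e [He [[_ [_ S1]] [_ [_ S2]]]]].
  assert (St : solves (fX Z) g t).
  { apply (solve_punct _ _ t e (XC Z HZ) He (g_cont Z g Hg t)).
    intros r [Hr0 Hr1]. apply Rabs_lt_between' in Hr1. destruct (Rlt_le_dec r t). apply S1; lra.
    destruct (Req_dec r t) as [->|]. rewrite Rminus_eq_0, Rabs_R0 in Hr0; lra. apply S2; lra. }
  exists e. split. exact He. intros r Hr. destruct (Rlt_le_dec r t). apply S1; lra.
  destruct (Req_dec r t) as [->|]. exact St. apply S2; lra.
Qed.

Lemma Ytype_solves Z g t : is_psvf Z -> global_traj Z g -> Ytype Z g t ->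
  exists e, e > 0 /\ forall r, t - e < r < t + e -> solves (fY Z) g r.
Proof.
  intros HZ Hg [e [He [[_ [_ S1]] [_ [_ S2]]]]].
  assert (St : solves (fY Z) g t).
  { apply (solve_punct _ _ t e (YC Z HZ) He (g_cont Z g Hg t)).
    intros r [Hr0 Hr1]. apply Rabs_lt_between' in Hr1. destruct (Rlt_le_dec r t). apply S1; lra.
    destruct (Req_dec r t) as [->|]. rewrite Rminus_eq_0, Rabs_R0 in Hr0; lra. apply S2; lra. }
  exists e. split. exact He. intros r Hr. destruct (Rlt_le_dec r t). apply S1; lra.
  destruct (Req_dec r t) as [->|]. exact St. apply S2; lra.
Qed.

Lemma Xtype_sw Z g t : Xtype Z g t -> exists e, e > 0 /\ forall r, t - e <= r <= t + e -> sw Z (g r) >= 0.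
Proof.
  intros [e [He [[_ [S1 _]] [_ [S2 _]]]]]. exists e. split. exact He.
  intros r Hr. destruct (Rle_dec r t). apply S1; lra. apply S2; lra.
Qed.
Lemma Ytype_sw Z g t : Ytype Z g t -> exists e, e > 0 /\ forall r, t - e <= r <= t + e -> sw Z (g r) <= 0.
Proof.
  intros [e [He [[_ [S1 _]] [_ [S2 _]]]]]. exists e. split. exact He.
  intros r Hr. destruct (Rle_dec r t). apply S1; lra. apply S2; lra.
Qed.

Lemma prod_cpt Z g t : is_psvf Z -> global_traj Z g ->
  continuity_pt (fun s => Xf Z (g s) * Yf Z (g s)) t.
Proof.
  intros HZ Hg. pose proof (g_cont Z g Hg t). apply ccomb_mult; apply lie_cpt; auto using swC, XC, YC.
Qed.

Lemma no_slide_near_sew Z g t : is_psvf Z -> global_traj Z g -> sewing Z (g t) ->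
  exists d, d > 0 /\ forall r, Rabs (r - t) < d -> ~ slide_esc Z (g r).
Proof.
  intros HZ Hg [_ Hp]. destruct (sign_near _ t (prod_cpt Z g t HZ Hg) Hp) as [d [Hd Hd']].
  exists d. split. exact Hd. intros r Hr [_ Hs]. specialize (Hd' r Hr). simpl in Hd'. lra.
Qed.

Lemma left_piece_sew Z g t : is_psvf Z -> global_traj Z g -> sewing Z (g t) ->
  exists e, e > 0 /\ (Xpiece Z g (t - e) t \/ Ypiece Z g (t - e) t).
Proof.
  intros HZ Hg Hs. destruct (no_slide_near_sew Z g t HZ Hg Hs) as [d [Hd Hd']].
  destruct (Hg t) as [e [He [Hl _]]].
  destruct Hl as [H|[H|[_ [_ H]]]]. exists e; auto. exists e; auto.
  exfalso. set (r := t - Rmin e d / 2). pose proof (Rmin_l e d). pose proof (Rmin_r e d).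
  assert (Rmin e d > 0) by (apply Rmin_pos; lra).
  apply (Hd' r). unfold r. rewrite Rabs_left; lra. apply H. unfold r; lra.
Qed.

Lemma right_piece_sew Z g t : is_psvf Z -> global_traj Z g -> sewing Z (g t) ->
  exists e, e > 0 /\ (Xpiece Z g t (t + e) \/ Ypiece Z g t (t + e)).
Proof.
  intros HZ Hg Hs. destruct (no_slide_near_sew Z g t HZ Hg Hs) as [d [Hd Hd']].
  destruct (Hg t) as [e [He [_ Hl]]].
  destruct Hl as [H|[H|[_ [_ H]]]]. exists e; auto. exists e; auto.
  exfalso. set (r := t + Rmin e d / 2). pose proof (Rmin_l e d). pose proof (Rmin_r e d).
  assert (Rmin e d > 0) by (apply Rmin_pos; lra).
  apply (Hd' r). unfold r. rewrite Rabs_pos_eq; lra. apply H. unfold r; lra.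
Qed.

Lemma sew_signs Z q : sewing Z q -> (Xf Z q < 0 /\ Yf Z q < 0) \/ (Xf Z q > 0 /\ Yf Z q > 0).
Proof.
  intros [_ H]. destruct (Rlt_le_dec (Xf Z q) 0); destruct (Rlt_le_dec (Yf Z q) 0).
  left; lra. right; nra. right; nra. right; split; nra.
Qed.

(* the generic contradiction: a piece on a side of Sigma leaving it in the wrong direction *)
Lemma left_sew_X Z g t : is_psvf Z -> global_traj Z g -> sewing Z (g t) -> Xf Z (g t) < 0 ->
  exists e, e > 0 /\ forall r, t - e < r < t -> solves (fX Z) g r.
Proof.
  intros HZ Hg Hs Hx. destruct (left_piece_sew Z g t HZ Hg Hs) as [e [He [HX|HY]]].
  - exists e. split. exact He. apply HX.
  - exfalso. assert (Hy : Yf Z (g t) < 0) by (destruct (sew_signs Z _ Hs); lra).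
    destruct HY as [_ [HY1 HY2]].
    destruct (sign_left (sw Z) (fY Z) g t e (swC Z HZ) (YC Z HZ) He) as [d [Hd Hd']].
    intros r Hr; apply (g_cont Z g Hg). exact HY2. apply Hs. fold (Yf Z); lra.
    set (r := t - Rmin e d / 2). pose proof (Rmin_l e d). pose proof (Rmin_r e d).
    assert (Rmin e d > 0) by (apply Rmin_pos; lra).
    specialize (Hd' r ltac:(unfold r; lra)). fold (Yf Z) in Hd'.
    destruct (HY1 r ltac:(unfold r; lra)) as [_ Hsw]. nra.
Qed.

Lemma left_sew_Y Z g t : is_psvf Z -> global_traj Z g -> sewing Z (g t) -> Xf Z (g t) > 0 ->
  exists e, e > 0 /\ forall r, t - e < r < t -> solves (fY Z) g r.
Proof.
  intros HZ Hg Hs Hx. destruct (left_piece_sew Z g t HZ Hg Hs) as [e [He [HX|HY]]].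
  - exfalso. destruct HX as [_ [HX1 HX2]].
    destruct (sign_left (sw Z) (fX Z) g t e (swC Z HZ) (XC Z HZ) He) as [d [Hd Hd']].
    intros r Hr; apply (g_cont Z g Hg). exact HX2. apply Hs. fold (Xf Z); lra.
    set (r := t - Rmin e d / 2). pose proof (Rmin_l e d). pose proof (Rmin_r e d).
    assert (Rmin e d > 0) by (apply Rmin_pos; lra).
    specialize (Hd' r ltac:(unfold r; lra)). fold (Xf Z) in Hd'.
    destruct (HX1 r ltac:(unfold r; lra)) as [_ Hsw]. nra.
  - exists e. split. exact He. apply HY.
Qed.

Lemma right_sew_Y Z g t : is_psvf Z -> global_traj Z g -> sewing Z (g t) -> Xf Z (g t) < 0 ->
  exists e, e > 0 /\ forall r, t < r < t + e -> solves (fY Z) g r.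
Proof.
  intros HZ Hg Hs Hx. destruct (right_piece_sew Z g t HZ Hg Hs) as [e [He [HX|HY]]].
  - exfalso. destruct HX as [_ [HX1 HX2]].
    destruct (sign_right (sw Z) (fX Z) g t e (swC Z HZ) (XC Z HZ) He) as [d [Hd Hd']].
    intros r Hr; apply (g_cont Z g Hg). exact HX2. apply Hs. fold (Xf Z); lra.
    set (r := t + Rmin e d / 2). pose proof (Rmin_l e d). pose proof (Rmin_r e d).
    assert (Rmin e d > 0) by (apply Rmin_pos; lra).
    specialize (Hd' r ltac:(unfold r; lra)). fold (Xf Z) in Hd'.
    destruct (HX1 r ltac:(unfold r; lra)) as [_ Hsw]. nra.
  - exists e. split. exact He. apply HY.
Qed.

Lemma right_sew_X Z g t : is_psvf Z -> global_traj Z g -> sewing Z (g t) -> Xf Z (g t) > 0 ->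
  exists e, e > 0 /\ forall r, t < r < t + e -> solves (fX Z) g r.
Proof.
  intros HZ Hg Hs Hx. destruct (right_piece_sew Z g t HZ Hg Hs) as [e [He [HX|HY]]].
  - exists e. split. exact He. apply HX.
  - exfalso. assert (Hy : Yf Z (g t) > 0) by (destruct (sew_signs Z _ Hs); lra).
    destruct HY as [_ [HY1 HY2]].
    destruct (sign_right (sw Z) (fY Z) g t e (swC Z HZ) (YC Z HZ) He) as [d [Hd Hd']].
    intros r Hr; apply (g_cont Z g Hg). exact HY2. apply Hs. fold (Yf Z); lra.
    set (r := t + Rmin e d / 2). pose proof (Rmin_l e d). pose proof (Rmin_r e d).
    assert (Rmin e d > 0) by (apply Rmin_pos; lra).
    specialize (Hd' r ltac:(unfold r; lra)). fold (Yf Z) in Hd'.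
    destruct (HY1 r ltac:(unfold r; lra)) as [_ Hsw]. nra.
Qed.

Lemma no_zero_sign (F : R -> R) a b r0 r1 : (forall x, continuity_pt F x) ->
  (forall r, a < r < b -> F r <> 0) -> a < r0 < b -> a < r1 < b -> F r0 > 0 -> F r1 > 0.
Proof.
  intros HF Hnz H0 H1 Hp. destruct (Rlt_le_dec 0 (F r1)) as [|Hle]. lra. exfalso.
  destruct (Req_dec (F r1) 0) as [Ez|Hne]. apply (Hnz r1 H1 Ez).
  destruct (Rlt_le_dec r0 r1).
  - destruct (IVT (fun x => - F x) r0 r1) as [z [Hz Fz]].
    intro x. apply continuity_pt_opp. apply HF. lra. lra. lra.
    apply (Hnz z). lra. lra.
  - destruct (Req_dec r0 r1) as [->|]. lra.
    destruct (IVT F r1 r0) as [z [Hz Fz]]. exact HF. lra. lra. lra.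
    apply (Hnz z). lra. exact Fz.
Qed.

Lemma no_zero_sign_neg (F : R -> R) a b r0 r1 : (forall x, continuity_pt F x) ->
  (forall r, a < r < b -> F r <> 0) -> a < r0 < b -> a < r1 < b -> F r0 < 0 -> F r1 < 0.
Proof.
  intros HF Hnz H0 H1 Hp.
  assert (- F r1 > 0). { apply (no_zero_sign (fun x => - F x) a b r0 r1).
    intro x. apply continuity_pt_opp. apply HF. intros r Hr. specialize (Hnz r Hr). lra. exact H0. exact H1. lra. }
  lra.
Qed.

Definition lobe_X Z g t s u :=
  t < s < u /\ sewing Z (g s) /\
  (forall r, t < r < s -> sw Z (g r) > 0) /\ (forall r, s < r < u -> sw Z (g r) < 0) /\
  Xf Z (g s) < 0 /\ Yf Z (g s) < 0 /\ Ytype Z g u.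
Definition lobe_Y Z g t s u :=
  t < s < u /\ sewing Z (g s) /\
  (forall r, t < r < s -> sw Z (g r) < 0) /\ (forall r, s < r < u -> sw Z (g r) > 0) /\
  Xf Z (g s) > 0 /\ Yf Z (g s) > 0 /\ Xtype Z g u.

Lemma LobeX Z g p t : is_psvf Z -> homoclinic_loop1 Z g p -> g t = p -> Xtype Z g t ->
  exists s u, g u = p /\ lobe_X Z g t s u.
Proof.
  intros HZ [Hg [Hvv [_ Hh]]] Ht HX.
  destruct (Hh t Ht) as [_ [s [u [Hsu [Hsew [Hu Hnz]]]]]].
  exists s, u. split. exact Hu.
  assert (Hc := sw_g_cpt Z g HZ Hg).
  assert (Hpos : forall r, t < r < s -> sw Z (g r) > 0).
  { destruct (Xtype_sw Z g t HX) as [e [He He']].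
    set (r0 := t + Rmin e (s - t) / 2). pose proof (Rmin_l e (s - t)). pose proof (Rmin_r e (s - t)).
    assert (Rmin e (s - t) > 0) by (apply Rmin_pos; lra).
    assert (Hr0 : sw Z (g r0) > 0).
    { assert (sw Z (g r0) <> 0) by (apply Hnz; unfold r0; lra). specialize (He' r0 ltac:(unfold r0; lra)). lra. }
    intros r Hr. apply (no_zero_sign (fun x => sw Z (g x)) t s r0 r Hc).
    intros r' Hr'. apply Hnz; lra. unfold r0; lra. exact Hr. exact Hr0. }
  assert (Hsol : forall r, t < r < s -> solves (fX Z) g r).
  { intros r Hr. destruct (pos_solves Z g r HZ Hg (Hpos r Hr)) as [e [He He']]. apply He'. lra. }
  assert (Hxs : Xf Z (g s) < 0).
  { destruct (sew_signs Z _ Hsew) as [[H1 _]|[H1 _]]. exact H1. exfalso.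
    destruct (sign_left (sw Z) (fX Z) g s (s - t) (swC Z HZ) (XC Z HZ) ltac:(lra)) as [d [Hd Hd']].
    intros r Hr; apply (g_cont Z g Hg). intros r Hr. apply Hsol. lra. apply Hsew. fold (Xf Z); lra.
    set (r := s - Rmin d (s - t) / 2). pose proof (Rmin_l d (s - t)). pose proof (Rmin_r d (s - t)).
    assert (Rmin d (s - t) > 0) by (apply Rmin_pos; lra).
    specialize (Hd' r ltac:(unfold r; lra)). fold (Xf Z) in Hd'.
    specialize (Hpos r ltac:(unfold r; lra)). nra. }
  assert (Hys : Yf Z (g s) < 0) by (destruct (sew_signs Z _ Hsew); lra).
  assert (Hneg : forall r, s < r < u -> sw Z (g r) < 0).
  { destruct (right_sew_Y Z g s HZ Hg Hsew Hxs) as [e [He He']].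
    destruct (sign_right (sw Z) (fY Z) g s e (swC Z HZ) (YC Z HZ) He) as [d [Hd Hd']].
    intros r Hr; apply (g_cont Z g Hg). exact He'. apply Hsew. fold (Yf Z); lra.
    set (r0 := s + Rmin d (u - s) / 2). pose proof (Rmin_l d (u - s)). pose proof (Rmin_r d (u - s)).
    assert (Rmin d (u - s) > 0) by (apply Rmin_pos; lra).
    assert (Hr0 : sw Z (g r0) < 0).
    { specialize (Hd' r0 ltac:(unfold r0; lra)). fold (Yf Z) in Hd'. nra. }
    intros r Hr. apply (no_zero_sign_neg (fun x => sw Z (g x)) s u r0 r Hc).
    intros r' Hr'. apply Hnz; lra. unfold r0; lra. exact Hr. exact Hr0. }
  assert (HY : Ytype Z g u).
  { destruct (Hh u Hu) as [Hp _]. destruct (passes_XY Z g u Hp) as [HX'|HY']. 2: exact HY'.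
    exfalso. destruct (Xtype_sw Z g u HX') as [e [He He']].
    set (r := u - Rmin e (u - s) / 2). pose proof (Rmin_l e (u - s)). pose proof (Rmin_r e (u - s)).
    assert (Rmin e (u - s) > 0) by (apply Rmin_pos; lra).
    specialize (He' r ltac:(unfold r; lra)). specialize (Hneg r ltac:(unfold r; lra)). lra. }
  repeat split; try lra; try assumption. apply Hsew. apply Hsew.
Qed.

Lemma LobeY Z g p t : is_psvf Z -> homoclinic_loop1 Z g p -> g t = p -> Ytype Z g t ->
  exists s u, g u = p /\ lobe_Y Z g t s u.
Proof.
  intros HZ [Hg [Hvv [_ Hh]]] Ht HX.
  destruct (Hh t Ht) as [_ [s [u [Hsu [Hsew [Hu Hnz]]]]]].
  exists s, u. split. exact Hu.
  assert (Hc := sw_g_cpt Z g HZ Hg).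
  assert (Hneg : forall r, t < r < s -> sw Z (g r) < 0).
  { destruct (Ytype_sw Z g t HX) as [e [He He']].
    set (r0 := t + Rmin e (s - t) / 2). pose proof (Rmin_l e (s - t)). pose proof (Rmin_r e (s - t)).
    assert (Rmin e (s - t) > 0) by (apply Rmin_pos; lra).
    assert (Hr0 : sw Z (g r0) < 0).
    { assert (sw Z (g r0) <> 0) by (apply Hnz; unfold r0; lra). specialize (He' r0 ltac:(unfold r0; lra)). lra. }
    intros r Hr. apply (no_zero_sign_neg (fun x => sw Z (g x)) t s r0 r Hc).
    intros r' Hr'. apply Hnz; lra. unfold r0; lra. exact Hr. exact Hr0. }
  assert (Hsol : forall r, t < r < s -> solves (fY Z) g r).
  { intros r Hr. destruct (neg_solves Z g r HZ Hg (Hneg r Hr)) as [e [He He']]. apply He'. lra. }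
  assert (Hys : Yf Z (g s) > 0).
  { destruct (sew_signs Z _ Hsew) as [[_ H1]|[_ H1]]. 2: exact H1. exfalso.
    destruct (sign_left (sw Z) (fY Z) g s (s - t) (swC Z HZ) (YC Z HZ) ltac:(lra)) as [d [Hd Hd']].
    intros r Hr; apply (g_cont Z g Hg). intros r Hr. apply Hsol. lra. apply Hsew. fold (Yf Z); lra.
    set (r := s - Rmin d (s - t) / 2). pose proof (Rmin_l d (s - t)). pose proof (Rmin_r d (s - t)).
    assert (Rmin d (s - t) > 0) by (apply Rmin_pos; lra).
    specialize (Hd' r ltac:(unfold r; lra)). fold (Yf Z) in Hd'.
    specialize (Hneg r ltac:(unfold r; lra)). nra. }
  assert (Hxs : Xf Z (g s) > 0) by (destruct (sew_signs Z _ Hsew); lra).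
  assert (Hpos : forall r, s < r < u -> sw Z (g r) > 0).
  { destruct (right_sew_X Z g s HZ Hg Hsew Hxs) as [e [He He']].
    destruct (sign_right (sw Z) (fX Z) g s e (swC Z HZ) (XC Z HZ) He) as [d [Hd Hd']].
    intros r Hr; apply (g_cont Z g Hg). exact He'. apply Hsew. fold (Xf Z); lra.
    set (r0 := s + Rmin d (u - s) / 2). pose proof (Rmin_l d (u - s)). pose proof (Rmin_r d (u - s)).
    assert (Rmin d (u - s) > 0) by (apply Rmin_pos; lra).
    assert (Hr0 : sw Z (g r0) > 0).
    { specialize (Hd' r0 ltac:(unfold r0; lra)). fold (Xf Z) in Hd'. nra. }
    intros r Hr. apply (no_zero_sign (fun x => sw Z (g x)) s u r0 r Hc).
    intros r' Hr'. apply Hnz; lra. unfold r0; lra. exact Hr. exact Hr0. }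
  assert (HY : Xtype Z g u).
  { destruct (Hh u Hu) as [Hp _]. destruct (passes_XY Z g u Hp) as [HX'|HY']. exact HX'.
    exfalso. destruct (Ytype_sw Z g u HY') as [e [He He']].
    set (r := u - Rmin e (u - s) / 2). pose proof (Rmin_l e (u - s)). pose proof (Rmin_r e (u - s)).
    assert (Rmin e (u - s) > 0) by (apply Rmin_pos; lra).
    specialize (He' r ltac:(unfold r; lra)). specialize (Hpos r ltac:(unfold r; lra)). lra. }
  repeat split; try lra; try assumption. apply Hsew. apply Hsew.
Qed.

Definition Bstr Z g p t0 s1 u1 s2 u2 :=
  g t0 = p /\ Xtype Z g t0 /\ g u1 = p /\ lobe_X Z g t0 s1 u1 /\ g u2 = p /\ lobe_Y Z g u1 s2 u2.

Lemma base_exists Z g p : is_psvf Z -> homoclinic_loop1 Z g p ->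
  exists t0 s1 u1 s2 u2, Bstr Z g p t0 s1 u1 s2 u2.
Proof.
  intros HZ Hh. pose proof Hh as [Hg [_ [[t Ht] Hall]]].
  assert (HX : exists t0, g t0 = p /\ Xtype Z g t0).
  { destruct (Hall t Ht) as [Hp _]. destruct (passes_XY Z g t Hp) as [HX|HY].
    exists t; auto. destruct (LobeY Z g p t HZ Hh Ht HY) as [s [u [Hu (_&_&_&_&_&_&HXu)]]].
    exists u; auto. }
  destruct HX as [t0 [Ht0 HX0]].
  destruct (LobeX Z g p t0 HZ Hh Ht0 HX0) as [s1 [u1 [Hu1 L1]]].
  assert (HY1 : Ytype Z g u1) by (destruct L1 as (_&_&_&_&_&_&HH); exact HH).
  destruct (LobeY Z g p u1 HZ Hh Hu1 HY1) as [s2 [u2 [Hu2 L2]]].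
  exists t0, s1, u1, s2, u2. exact (conj Ht0 (conj HX0 (conj Hu1 (conj L1 (conj Hu2 L2))))).
Qed.

Definition fieldR Z q : pt -> pt :=
  if Rlt_dec 0 (sw Z q) then fX Z else if Rlt_dec (sw Z q) 0 then fY Z
  else if Rlt_dec (Xf Z q) 0 then fY Z else fX Z.
Definition fieldL Z q : pt -> pt :=
  if Rlt_dec 0 (sw Z q) then fX Z else if Rlt_dec (sw Z q) 0 then fY Z
  else if Rlt_dec (Xf Z q) 0 then fX Z else fY Z.

Lemma fieldR_LL Z q : is_psvf Z -> LocLip (fieldR Z q).
Proof.
  intro HZ. pose proof (fieldC1_LocLip _ (XC Z HZ)). pose proof (fieldC1_LocLip _ (YC Z HZ)).
  unfold fieldR. repeat destruct Rlt_dec; assumption.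
Qed.
Lemma fieldL_LL Z q : is_psvf Z -> LocLip (fieldL Z q).
Proof.
  intro HZ. pose proof (fieldC1_LocLip _ (XC Z HZ)). pose proof (fieldC1_LocLip _ (YC Z HZ)).
  unfold fieldL. repeat destruct Rlt_dec; assumption.
Qed.

Lemma fieldR_ok Z g t : is_psvf Z -> global_traj Z g -> (sw Z (g t) <> 0 \/ sewing Z (g t)) ->
  exists e, e > 0 /\ forall r, t < r < t + e -> solves (fieldR Z (g t)) g r.
Proof.
  intros HZ Hg H. unfold fieldR. destruct (Rlt_dec 0 (sw Z (g t))).
  { destruct (pos_solves Z g t HZ Hg r) as [e [He He']]. exists e. split. exact He. intros; apply He'; lra. }
  destruct (Rlt_dec (sw Z (g t)) 0).
  { destruct (neg_solves Z g t HZ Hg r) as [e [He He']]. exists e. split. exact He. intros; apply He'; lra. }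
  assert (Hs : sewing Z (g t)) by (destruct H; [lra|exact H]).
  destruct (Rlt_dec (Xf Z (g t)) 0).
  apply right_sew_Y; auto.
  apply right_sew_X; auto. destruct (sew_signs Z _ Hs); lra.
Qed.

Lemma fieldL_ok Z g t : is_psvf Z -> global_traj Z g -> (sw Z (g t) <> 0 \/ sewing Z (g t)) ->
  exists e, e > 0 /\ forall r, t - e < r < t -> solves (fieldL Z (g t)) g r.
Proof.
  intros HZ Hg H. unfold fieldL. destruct (Rlt_dec 0 (sw Z (g t))).
  { destruct (pos_solves Z g t HZ Hg r) as [e [He He']]. exists e. split. exact He. intros; apply He'; lra. }
  destruct (Rlt_dec (sw Z (g t)) 0).
  { destruct (neg_solves Z g t HZ Hg r) as [e [He He']]. exists e. split. exact He. intros; apply He'; lra. }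
  assert (Hs : sewing Z (g t)) by (destruct H; [lra|exact H]).
  destruct (Rlt_dec (Xf Z (g t)) 0).
  apply left_sew_X; auto.
  apply left_sew_Y; auto. destruct (sew_signs Z _ Hs); lra.
Qed.

Lemma shift_cont g c t : cont_at g (t + c) -> cont_at (fun s => g (s + c)) t.
Proof.
  intros H. apply cont_at_iff in H as [H1 H2]. apply cont_at_iff. split.
  apply (continuity_pt_comp (fun s => s + c) (fun s => fst (g s))). apply derivable_continuous_pt.
  exists 1. apply dext with (fun s => c + 1 * s). intro; ring. apply dlin. exact H1.
  apply (continuity_pt_comp (fun s => s + c) (fun s => snd (g s))). apply derivable_continuous_pt.
  exists 1. apply dext with (fun s => c + 1 * s). intro; ring. apply dlin. exact H2.
Qed.

Lemma shift_solves W g c t : solves W g (t + c) -> solves W (fun s => g (s + c)) t.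
Proof.
  intros [H1 H2].
  assert (Hd : is_derive (fun s : R => s + c) t 1).
  { apply is_derive_Reals. apply dext with (fun s => c + 1 * s). intro; ring. apply dlin. }
  split.
  - replace (fst (W (g (t + c)))) with (scal 1 (fst (W (g (t + c))))).
    apply (is_derive_comp (fun s => fst (g s)) (fun s => s + c)). exact H1. exact Hd.
    unfold scal; simpl; unfold mult; simpl. ring.
  - replace (snd (W (g (t + c)))) with (scal 1 (snd (W (g (t + c))))).
    apply (is_derive_comp (fun s => snd (g s)) (fun s => s + c)). exact H2. exact Hd.
    unfold scal; simpl; unfold mult; simpl. ring.
Qed.

Lemma fwd_step W g1 g2 t e : LocLip W -> e > 0 -> (forall r, cont_at g1 r /\ cont_at g2 r) ->
  (forall r, t < r < t + e -> solves W g1 r /\ solves W g2 r) -> g1 t = g2 t ->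
  exists d, d > 0 /\ forall s, t < s < t + d -> g1 s = g2 s.
Proof.
  intros HL He Hc Hs E. exists (e / 2). split. lra. intros s Hs'.
  apply (uniq_fwd W g1 g2 t (t + e / 2) HL ltac:(lra)); auto. intros r Hr. apply Hs. lra. lra.
Qed.

Lemma bwd_step W g1 g2 t e : LocLip W -> e > 0 -> (forall r, cont_at g1 r /\ cont_at g2 r) ->
  (forall r, t - e < r < t -> solves W g1 r /\ solves W g2 r) -> g1 t = g2 t ->
  exists d, d > 0 /\ forall s, t - d < s < t -> g1 s = g2 s.
Proof.
  intros HL He Hc Hs E. exists (e / 2). split. lra. intros s Hs'.
  apply (uniq_bwd W g1 g2 (t - e / 2) t HL ltac:(lra)); auto. intros r Hr. apply Hs. lra. lra.
Qed.

Lemma base_point Z g p t0 s1 u1 s2 u2 : Bstr Z g p t0 s1 u1 s2 u2 ->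
  forall t, t0 < t < u2 -> t <> u1 -> sw Z (g t) <> 0 \/ sewing Z (g t).
Proof.
  intros (_&_&_&(Ho1&Hs1&Hp1&Hn1&_)&_&(Ho2&Hs2&Hn2&Hp2&_)) t Ht Hne.
  destruct (Rlt_le_dec t s1). left. specialize (Hp1 t ltac:(lra)). lra.
  destruct (Req_dec t s1) as [->|]. right. exact Hs1.
  destruct (Rlt_le_dec t u1). left. specialize (Hn1 t ltac:(lra)). lra.
  destruct (Rlt_le_dec t s2). left. specialize (Hn2 t ltac:(lra)). lra.
  destruct (Req_dec t s2) as [->|]. right. exact Hs2.
  left. specialize (Hp2 t ltac:(lra)). lra.
Qed.

Lemma base_order Z g p t0 s1 u1 s2 u2 : Bstr Z g p t0 s1 u1 s2 u2 -> t0 < s1 < u1 /\ u1 < s2 < u2.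
Proof. intros (_&_&_&(H1&_)&_&(H2&_)). lra. Qed.

Lemma Fwd Z g p t0 s1 u1 s2 u2 tau : is_psvf Z -> homoclinic_loop1 Z g p -> Bstr Z g p t0 s1 u1 s2 u2 ->
  g tau = p -> Xtype Z g tau ->
  (forall r, 0 <= r <= u2 - t0 -> g (tau + r) = g (t0 + r)) /\ Xtype Z g (tau + (u2 - t0)).
Proof.
  intros HZ Hh HB Ht HXt. pose proof Hh as [Hg [_ [_ Hall]]].
  pose proof (base_order _ _ _ _ _ _ _ _ HB) as Ho.
  pose proof HB as (Ht0 & HX0 & Hu1 & (_&_&_&Hn1&_&_&HY1) & Hu2 & (_&_&_&Hp2&_)).
  set (c := t0 - tau). set (psi := fun s => g (s + c)).
  assert (Hcont : forall r, cont_at g r /\ cont_at psi r).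
  { intro r. split. apply (g_cont Z g Hg). apply shift_cont. apply (g_cont Z g Hg). }
  assert (Main : forall t, tau <= t <= tau + (u2 - t0) -> g t = psi t).
  { apply real_induction. lra. unfold psi, c. replace (tau + (t0 - tau)) with t0 by ring. congruence.
    - intros t Ht' HQ. assert (Eq : g t = g (t + c)) by (apply HQ; lra).
      destruct (Req_dec (t + c) t0) as [E0|N0].
      +
        assert (t = tau) by (unfold c in E0; lra). subst t.
        destruct (Xtype_solves Z g tau HZ Hg HXt) as [e1 [He1 S1]].
        destruct (Xtype_solves Z g t0 HZ Hg HX0) as [e2 [He2 S2]].
        destruct (fwd_step (fX Z) g psi tau (Rmin e1 e2) (fieldC1_LocLip _ (XC Z HZ)) (Rmin_pos _ _ He1 He2) Hcont)
          as [d [Hd Hd']].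
        intros r Hr. pose proof (Rmin_l e1 e2). pose proof (Rmin_r e1 e2). split. apply S1; lra.
        apply shift_solves. apply S2. unfold c in *; lra. exact Eq.
        exists d. split. exact Hd. intros s Hs _. apply Hd'. exact Hs.
      + destruct (Req_dec (t + c) u1) as [E1|N1].
        *
          assert (HYt : Ytype Z g t).
          { assert (Hgt : g t = p) by (rewrite Eq, E1; exact Hu1).
            destruct (Hall t Hgt) as [Hp _]. destruct (passes_XY Z g t Hp) as [HX'|HY']. 2: exact HY'.
            exfalso. destruct (Xtype_sw Z g t HX') as [e [He He']].
            pose proof (Rmin_l e (u1 - s1)). pose proof (Rmin_r e (u1 - s1)).
            set (m := Rmin e (u1 - s1)) in *. assert (m > 0) by (unfold m; apply Rmin_pos; lra).
            set (r := t - m / 2).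
            assert (Hr1 : tau <= r <= t) by (unfold r, c in *; lra).
            specialize (He' r ltac:(unfold r; lra)). rewrite (HQ r Hr1) in He'. unfold psi in He'.
            specialize (Hn1 (r + c) ltac:(unfold r, c in *; lra)). lra. }
          destruct (Ytype_solves Z g t HZ Hg HYt) as [e1 [He1 S1]].
          destruct (Ytype_solves Z g u1 HZ Hg HY1) as [e2 [He2 S2]].
          destruct (fwd_step (fY Z) g psi t (Rmin e1 e2) (fieldC1_LocLip _ (YC Z HZ)) (Rmin_pos _ _ He1 He2) Hcont)
            as [d [Hd Hd']].
          intros r Hr. pose proof (Rmin_l e1 e2). pose proof (Rmin_r e1 e2). split. apply S1; lra.
          apply shift_solves. apply S2. lra. exact Eq.
          exists d. split. exact Hd. intros s Hs _. apply Hd'. exact Hs.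
        * assert (Hpt : sw Z (g (t + c)) <> 0 \/ sewing Z (g (t + c))).
          { apply (base_point _ _ _ _ _ _ _ _ HB). unfold c in *; lra. exact N1. }
          destruct (fieldR_ok Z g (t + c) HZ Hg Hpt) as [e2 [He2 S2]].
          rewrite <- Eq in Hpt, S2.
          destruct (fieldR_ok Z g t HZ Hg Hpt) as [e1 [He1 S1]].
          destruct (fwd_step _ g psi t (Rmin e1 e2) (fieldR_LL Z (g t) HZ) (Rmin_pos _ _ He1 He2) Hcont)
            as [d [Hd Hd']].
          intros r Hr. pose proof (Rmin_l e1 e2). pose proof (Rmin_r e1 e2). split. apply S1; lra.
          apply shift_solves. apply S2. lra. exact Eq.
          exists d. split. exact Hd. intros s Hs _. apply Hd'. exact Hs.
    - intros t Ht' HQ. apply (eq_closure_left _ _ tau). lra. apply Hcont. apply Hcont. exact HQ. }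
  split.
  - intros r Hr. rewrite (Main (tau + r)) by lra. unfold psi, c. f_equal. ring.
  - assert (Hgp : g (tau + (u2 - t0)) = p).
    { rewrite Main by lra. unfold psi, c. replace (tau + (u2 - t0) + (t0 - tau)) with u2 by ring. exact Hu2. }
    destruct (Hall _ Hgp) as [Hp _]. destruct (passes_XY Z g _ Hp) as [HX'|HY']. exact HX'.
    exfalso. destruct (Ytype_sw Z g _ HY') as [e [He He']].
    pose proof (Rmin_l e (u2 - s2)). pose proof (Rmin_r e (u2 - s2)).
    set (m := Rmin e (u2 - s2)) in *. assert (m > 0) by (unfold m; apply Rmin_pos; lra).
    set (r := tau + (u2 - t0) - m / 2).
    specialize (He' r ltac:(unfold r; lra)). rewrite (Main r) in He' by (unfold r; lra). unfold psi in He'.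
    specialize (Hp2 (r + c) ltac:(unfold r, c in *; lra)). lra.
Qed.

Lemma Back Z g p t0 s1 u1 s2 u2 tau : is_psvf Z -> homoclinic_loop1 Z g p -> Bstr Z g p t0 s1 u1 s2 u2 ->
  g tau = p -> Xtype Z g tau ->
  (forall r, 0 <= r <= u2 - t0 -> g (tau - (u2 - t0) + r) = g (t0 + r)) /\ Xtype Z g (tau - (u2 - t0)).
Proof.
  intros HZ Hh HB Ht HXt. pose proof Hh as [Hg [_ [_ Hall]]].
  pose proof (base_order _ _ _ _ _ _ _ _ HB) as Ho.
  pose proof HB as (Ht0 & HX0 & Hu1 & (_&_&Hp1&_&_&_&HY1) & Hu2 & (_&_&Hn2&_&_&_&HX2)).
  set (c := u2 - tau). set (psi := fun s => g (s + c)).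
  assert (Hcont : forall r, cont_at g r /\ cont_at psi r).
  { intro r. split. apply (g_cont Z g Hg). apply shift_cont. apply (g_cont Z g Hg). }
  assert (Main : forall t, tau - (u2 - t0) <= t <= tau -> g t = psi t).
  { apply real_induction_bwd. lra. unfold psi, c. replace (tau + (u2 - tau)) with u2 by ring. congruence.
    - intros t Ht' HQ. assert (Eq : g t = g (t + c)) by (apply HQ; lra).
      destruct (Req_dec (t + c) u2) as [E0|N0].
      + assert (t = tau) by (unfold c in E0; lra). subst t.
        destruct (Xtype_solves Z g tau HZ Hg HXt) as [e1 [He1 S1]].
        destruct (Xtype_solves Z g u2 HZ Hg HX2) as [e2 [He2 S2]].
        destruct (bwd_step (fX Z) g psi tau (Rmin e1 e2) (fieldC1_LocLip _ (XC Z HZ)) (Rmin_pos _ _ He1 He2) Hcont)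
          as [d [Hd Hd']].
        intros r Hr. pose proof (Rmin_l e1 e2). pose proof (Rmin_r e1 e2). split. apply S1; lra.
        apply shift_solves. apply S2. unfold c in *; lra. exact Eq.
        exists d. split. exact Hd. intros s Hs _. apply Hd'. exact Hs.
      + destruct (Req_dec (t + c) u1) as [E1|N1].
        * assert (HYt : Ytype Z g t).
          { assert (Hgt : g t = p) by (rewrite Eq, E1; exact Hu1).
            destruct (Hall t Hgt) as [Hp _]. destruct (passes_XY Z g t Hp) as [HX'|HY']. 2: exact HY'.
            exfalso. destruct (Xtype_sw Z g t HX') as [e [He He']].
            pose proof (Rmin_l e (s2 - u1)). pose proof (Rmin_r e (s2 - u1)).
            set (m := Rmin e (s2 - u1)) in *. assert (m > 0) by (unfold m; apply Rmin_pos; lra).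
            set (r := t + m / 2).
            assert (Hr1 : t <= r <= tau) by (unfold r, c in *; lra).
            specialize (He' r ltac:(unfold r; lra)). rewrite (HQ r Hr1) in He'. unfold psi in He'.
            specialize (Hn2 (r + c) ltac:(unfold r, c in *; lra)). lra. }
          destruct (Ytype_solves Z g t HZ Hg HYt) as [e1 [He1 S1]].
          destruct (Ytype_solves Z g u1 HZ Hg HY1) as [e2 [He2 S2]].
          destruct (bwd_step (fY Z) g psi t (Rmin e1 e2) (fieldC1_LocLip _ (YC Z HZ)) (Rmin_pos _ _ He1 He2) Hcont)
            as [d [Hd Hd']].
          intros r Hr. pose proof (Rmin_l e1 e2). pose proof (Rmin_r e1 e2). split. apply S1; lra.
          apply shift_solves. apply S2. lra. exact Eq.
          exists d. split. exact Hd. intros s Hs _. apply Hd'. exact Hs.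
        * assert (Hpt : sw Z (g (t + c)) <> 0 \/ sewing Z (g (t + c))).
          { apply (base_point _ _ _ _ _ _ _ _ HB). unfold c in *; lra. exact N1. }
          destruct (fieldL_ok Z g (t + c) HZ Hg Hpt) as [e2 [He2 S2]].
          rewrite <- Eq in Hpt, S2.
          destruct (fieldL_ok Z g t HZ Hg Hpt) as [e1 [He1 S1]].
          destruct (bwd_step _ g psi t (Rmin e1 e2) (fieldL_LL Z (g t) HZ) (Rmin_pos _ _ He1 He2) Hcont)
            as [d [Hd Hd']].
          intros r Hr. pose proof (Rmin_l e1 e2). pose proof (Rmin_r e1 e2). split. apply S1; lra.
          apply shift_solves. apply S2. lra. exact Eq.
          exists d. split. exact Hd. intros s Hs _. apply Hd'. exact Hs.
    - intros t Ht' HQ. apply (eq_closure_right _ _ tau). lra. apply Hcont. apply Hcont. exact HQ. }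
  split.
  - intros r Hr. rewrite (Main (tau - (u2 - t0) + r)) by lra. unfold psi, c. f_equal. ring.
  - assert (Hgp : g (tau - (u2 - t0)) = p).
    { rewrite Main by lra. unfold psi, c. replace (tau - (u2 - t0) + (u2 - tau)) with t0 by ring. exact Ht0. }
    destruct (Hall _ Hgp) as [Hp _]. destruct (passes_XY Z g _ Hp) as [HX'|HY']. exact HX'.
    exfalso. destruct (Ytype_sw Z g _ HY') as [e [He He']].
    pose proof (Rmin_l e (s1 - t0)). pose proof (Rmin_r e (s1 - t0)).
    set (m := Rmin e (s1 - t0)) in *. assert (m > 0) by (unfold m; apply Rmin_pos; lra).
    set (r := tau - (u2 - t0) + m / 2).
    specialize (He' r ltac:(unfold r; lra)). rewrite (Main r) in He' by (unfold r; lra). unfold psi in He'.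
    specialize (Hp1 (r + c) ltac:(unfold r, c in *; lra)). lra.
Qed.

Lemma cover Z g p t0 s1 u1 s2 u2 : is_psvf Z -> homoclinic_loop1 Z g p -> Bstr Z g p t0 s1 u1 s2 u2 ->
  forall t, exists t', t0 <= t' <= u2 /\ g t = g t'.
Proof.
  intros HZ Hh HB. pose proof (base_order _ _ _ _ _ _ _ _ HB) as Ho.
  pose proof HB as (Ht0 & HX0 & _).
  set (P := u2 - t0).
  assert (Fw : forall n : nat, g (t0 + INR n * P) = p /\ Xtype Z g (t0 + INR n * P) /\
     forall r, 0 <= r <= P -> g (t0 + INR n * P + r) = g (t0 + r)).
  { induction n as [|n IH].
    - simpl. rewrite Rmult_0_l, Rplus_0_r. split. exact Ht0. split. exact HX0. intros; reflexivity.
    - destruct IH as [Hp [HX _]].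
      destruct (Fwd Z g p t0 s1 u1 s2 u2 _ HZ Hh HB Hp HX) as [Hm HXn].
      rewrite S_INR. replace (t0 + (INR n + 1) * P) with (t0 + INR n * P + (u2 - t0)) by (unfold P; ring).
      split. rewrite Hm. replace (t0 + (u2 - t0)) with u2 by ring. apply HB. unfold P; lra.
      split. exact HXn.
      intros r Hr.
      assert (Hp' : g (t0 + INR n * P + (u2 - t0)) = p).
      { rewrite Hm. replace (t0 + (u2 - t0)) with u2 by ring. apply HB. unfold P; lra. }
      destruct (Fwd Z g p t0 s1 u1 s2 u2 _ HZ Hh HB Hp' HXn) as [Hm' _]. apply Hm'. exact Hr. }
  assert (Bw : forall n : nat, g (t0 - INR n * P) = p /\ Xtype Z g (t0 - INR n * P) /\
     forall r, 0 <= r <= P -> g (t0 - INR n * P - P + r) = g (t0 + r)).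
  { induction n as [|n IH].
    - simpl. rewrite Rmult_0_l, Rminus_0_r. split. exact Ht0. split. exact HX0.
      destruct (Back Z g p t0 s1 u1 s2 u2 _ HZ Hh HB Ht0 HX0) as [Hm _]. exact Hm.
    - destruct IH as [Hp [HX _]].
      destruct (Back Z g p t0 s1 u1 s2 u2 _ HZ Hh HB Hp HX) as [Hm HXn].
      rewrite S_INR. replace (t0 - (INR n + 1) * P) with (t0 - INR n * P - (u2 - t0)) by (unfold P; ring).
      assert (Hp' : g (t0 - INR n * P - (u2 - t0)) = p).
      { specialize (Hm 0 ltac:(unfold P; lra)). rewrite Rplus_0_r, Rplus_0_r in Hm. rewrite Hm. exact Ht0. }
      split. exact Hp'. split. exact HXn.
      destruct (Back Z g p t0 s1 u1 s2 u2 _ HZ Hh HB Hp' HXn) as [Hm' _]. exact Hm'. }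
  intros t.
  assert (HP : P > 0) by (unfold P; lra).
  assert (Hex : exists n : nat, Rabs (t - t0) <= INR n * P).
  { destruct (INR_archimed P (Rabs (t - t0)) HP) as [n Hn]. exists n. lra. }
  destruct Hex as [n Hn].
  destruct (Rle_dec t0 t) as [Hge|Hlt].
  - assert (G : forall k : nat, t0 <= t <= t0 + INR k * P -> exists t', t0 <= t' <= u2 /\ g t = g t').
    { induction k as [|k IH]; intros Hk.
      - simpl in Hk. exists t0. split. lra. f_equal. lra.
      - rewrite S_INR in Hk. destruct (Rle_dec t (t0 + INR k * P)). apply IH. lra.
        destruct (Fw k) as [_ [_ Hm]]. exists (t0 + (t - (t0 + INR k * P))). split. unfold P in *; lra.
        rewrite <- Hm. f_equal. ring. lra. }
    apply (G n). split. exact Hge. rewrite Rabs_pos_eq in Hn; lra.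
  - assert (G : forall k : nat, t0 - INR k * P <= t <= t0 -> exists t', t0 <= t' <= u2 /\ g t = g t').
    { induction k as [|k IH]; intros Hk.
      - simpl in Hk. exists t0. split. lra. f_equal. lra.
      - rewrite S_INR in Hk. destruct (Rle_dec (t0 - INR k * P) t). apply IH. lra.
        destruct (Bw k) as [_ [_ Hm]]. exists (t0 + (t - (t0 - INR k * P - P))). split. unfold P in *; lra.
        rewrite <- Hm. f_equal. ring. lra. }
    apply (G n). split. rewrite Rabs_left in Hn; lra. lra.
Qed.

Lemma ArcMatch Z g W a1 b1 a2 b2 : global_traj Z g -> LocLip W -> a1 < b1 -> a2 < b2 ->
  (forall r, a1 < r < b1 -> solves W g r /\ sw Z (g r) <> 0) ->
  (forall r, a2 < r < b2 -> solves W g r /\ sw Z (g r) <> 0) ->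
  sw Z (g b1) = 0 -> sw Z (g b2) = 0 -> g a1 = g a2 ->
  b1 - a1 = b2 - a2 /\ g b1 = g b2.
Proof.
  intros Hg HL H1 H2 S1 S2 Z1 Z2 E.
  set (m := Rmin (b1 - a1) (b2 - a2)).
  pose proof (Rmin_l (b1 - a1) (b2 - a2)). pose proof (Rmin_r (b1 - a1) (b2 - a2)).
  assert (Hm : m > 0) by (unfold m; apply Rmin_pos; lra).
  assert (U : g (m + a1) = g (m + a2)).
  { apply (uniq_fwd W (fun r => g (r + a1)) (fun r => g (r + a2)) 0 m HL ltac:(lra)).
    - intros t _. split; apply shift_cont; apply (g_cont Z g Hg).
    - intros t Ht. split; apply shift_solves. apply S1. unfold m in *; lra. apply S2. unfold m in *; lra.
    - simpl. rewrite !Rplus_0_l. exact E.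
    - lra. }
  destruct (Rtotal_order (b1 - a1) (b2 - a2)) as [Hlt|[Heq|Hgt]].
  - exfalso. assert (m = b1 - a1) by (unfold m; rewrite Rmin_left; lra).
    replace (m + a1) with b1 in U by lra. destruct (S2 (m + a2)) as [_ Hn]. lra. apply Hn. rewrite <- U. exact Z1.
  - split. exact Heq. assert (m = b1 - a1) by (unfold m; rewrite Rmin_left; lra).
    replace (m + a1) with b1 in U by lra. replace (m + a2) with b2 in U by lra. exact U.
  - exfalso. assert (m = b2 - a2) by (unfold m; rewrite Rmin_right; lra).
    replace (m + a2) with b2 in U by lra. destruct (S1 (m + a1)) as [_ Hn]. lra. apply Hn. rewrite U. exact Z2.
Qed.

Definition LoopData Z g (A t0 s1 u1 s2 : R) : Prop :=
  A < t0 < s1 /\ s1 < u1 < s2 /\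
  (forall t, exists t', A <= t' <= s2 /\ g t = g t') /\
  g A = g s2 /\ g t0 = g u1 /\
  (forall t t', A <= t <= s2 -> A <= t' <= s2 -> g t = g t' ->
     t = t' \/ (t = A /\ t' = s2) \/ (t = s2 /\ t' = A) \/ (t = t0 /\ t' = u1) \/ (t = u1 /\ t' = t0)) /\
  (forall t, A < t < t0 \/ t0 < t < s1 -> sw Z (g t) > 0) /\
  (forall t, s1 < t < u1 \/ u1 < t < s2 -> sw Z (g t) < 0) /\
  sw Z (g A) = 0 /\ sw Z (g t0) = 0 /\ sw Z (g s1) = 0 /\
  (forall t, A < t < s1 -> solves (fX Z) g t) /\
  (forall t, s1 < t < s2 -> solves (fY Z) g t) /\
  Xf Z (g s1) < 0 /\ Yf Z (g s2) > 0 /\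
  ~ slide_esc Z (g A) /\ ~ slide_esc Z (g t0) /\ ~ slide_esc Z (g s1).

Lemma loop_data Z g p : is_psvf Z -> homoclinic_loop1 Z g p ->
  exists A t0 s1 u1 s2, LoopData Z g A t0 s1 u1 s2.
Proof.
  intros HZ Hh. pose proof Hh as [Hg [[[_ [Hxp _]] _] [_ Hall]]].
  destruct (base_exists Z g p HZ Hh) as [t0 [s1 [u1 [s2 [u2 HB]]]]].
  pose proof (base_order _ _ _ _ _ _ _ _ HB) as Ho.
  pose proof HB as (Ht0 & HX0 & Hu1 & (_&Hsew1&Hp1&Hn1&Hx1&Hy1&HY1) & Hu2 & (_&Hsew2&Hn2&Hp2&Hx2&Hy2&HX2)).
  set (P := u2 - t0). set (A := s2 - P).
  destruct (Back Z g p t0 s1 u1 s2 u2 t0 HZ Hh HB Ht0 HX0) as [Hbk _].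
  assert (Hper : forall t, A <= t <= t0 -> g t = g (t + P)).
  { intros t Ht. specialize (Hbk (t - t0 + P) ltac:(unfold A, P in *; lra)).
    replace (t0 - (u2 - t0) + (t - t0 + P)) with t in Hbk by (unfold P; ring).
    rewrite Hbk. f_equal. unfold P; ring. }
  assert (HA : g A = g s2). { rewrite Hper by (unfold A, P; lra). f_equal. unfold A; ring. }
  assert (HAo : A < t0) by (unfold A, P; lra).
  assert (Hpos : forall t, A < t < t0 \/ t0 < t < s1 -> sw Z (g t) > 0).
  { intros t [Ht|Ht]. rewrite Hper by lra. apply Hp2. unfold A, P in *; lra. apply Hp1. lra. }
  assert (Hneg : forall t, s1 < t < u1 \/ u1 < t < s2 -> sw Z (g t) < 0).
  { intros t [Ht|Ht]. apply Hn1. lra. apply Hn2. lra. }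
  assert (Sw2 : sw Z (g s2) = 0) by apply Hsew2.
  assert (Sw1 : sw Z (g s1) = 0) by apply Hsew1.
  assert (Sw0 : sw Z (g t0) = 0) by (rewrite Ht0; apply Hh).
  assert (Xp : Xf Z p = 0) by exact Hxp.
  assert (SX : forall t, A < t < s1 -> solves (fX Z) g t).
  { intros t Ht. destruct (Req_dec t t0) as [->|Hne].
    destruct (Xtype_solves Z g t0 HZ Hg HX0) as [e [He He']]. apply He'. lra.
    destruct (pos_solves Z g t HZ Hg (Hpos t ltac:(lra))) as [e [He He']]. apply He'. lra. }
  assert (SY : forall t, s1 < t < s2 -> solves (fY Z) g t).
  { intros t Ht. destruct (Req_dec t u1) as [->|Hne].
    destruct (Ytype_solves Z g u1 HZ Hg HY1) as [e [He He']]. apply He'. lra.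
    destruct (neg_solves Z g t HZ Hg (Hneg t ltac:(lra))) as [e [He He']]. apply He'. lra. }
  assert (LX := fieldC1_LocLip _ (XC Z HZ)). assert (LY := fieldC1_LocLip _ (YC Z HZ)).
  assert (Inj : forall t t', A <= t < t' -> t' <= s2 -> g t = g t' ->
     (t = A /\ t' = s2) \/ (t = t0 /\ t' = u1)).
  { intros t t' Ht Ht' E.
    assert (EX : Xf Z (g t) = Xf Z (g t')) by (rewrite E; reflexivity).
    assert (ES : sw Z (g t) = sw Z (g t')) by (rewrite E; reflexivity).
    destruct (Rtotal_order (sw Z (g t)) 0) as [Sn|[S0|Sp]].
    -
      assert (Ht1 : s1 < t < u1 \/ u1 < t < s2).
      { destruct (Rle_lt_dec t A). assert (t = A) by lra. subst t. rewrite HA in Sn. lra.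
        destruct (Rlt_le_dec t t0). specialize (Hpos t ltac:(lra)). lra.
        destruct (Req_dec t t0). subst t. lra. destruct (Rlt_le_dec t s1). specialize (Hpos t ltac:(lra)). lra.
        destruct (Req_dec t s1). subst t. lra. destruct (Req_dec t u1). subst t. rewrite Hu1, <- Ht0 in Sn. lra.
        destruct (Req_dec t s2). lra. lra. }
      assert (Ht2 : s1 < t' < u1 \/ u1 < t' < s2).
      { rewrite ES in Sn. destruct (Req_dec t' u1). subst t'. rewrite Hu1, <- Ht0 in Sn. lra.
        destruct (Req_dec t' s2). subst t'. lra. lra. }
      set (nx := fun x => if Rlt_dec x u1 then u1 else s2).
      assert (Hnx : forall x, s1 < x < u1 \/ u1 < x < s2 -> x < nx x /\ (nx x = u1 \/ nx x = s2) /\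
                  (forall r, x < r < nx x -> solves (fY Z) g r /\ sw Z (g r) <> 0) /\ sw Z (g (nx x)) = 0).
      { intros x Hx. unfold nx. destruct (Rlt_dec x u1).
        - split. lra. split. auto. split. intros r0 Hr0. split. apply SY; lra. specialize (Hneg r0 ltac:(lra)). lra.
          rewrite Hu1, <- Ht0. exact Sw0.
        - split. lra. split. auto. split. intros r0 Hr0. split. apply SY; lra. specialize (Hneg r0 ltac:(lra)). lra.
          exact Sw2. }
      destruct (Hnx t Ht1) as [N1 [N1' [N1'' N1''']]]. destruct (Hnx t' Ht2) as [N2 [N2' [N2'' N2''']]].
      destruct (ArcMatch Z g (fY Z) t (nx t) t' (nx t') Hg LY N1 N2 N1'' N2'' N1''' N2''' E) as [D Eg].
      exfalso. destruct N1' as [Q1|Q1]; destruct N2' as [Q2|Q2]; rewrite Q1, Q2 in *; try lra.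
      rewrite Hu1, <- Ht0 in Eg. assert (Xf Z (g t0) = Xf Z (g s2)) by (rewrite Eg; reflexivity). rewrite Ht0 in H. lra.
    -
      assert (K : forall x, A <= x <= s2 -> sw Z (g x) = 0 -> x = A \/ x = t0 \/ x = s1 \/ x = u1 \/ x = s2).
      { intros x Hx Sx. destruct (Req_dec x A). auto. destruct (Req_dec x t0). auto. destruct (Req_dec x s1). auto.
        destruct (Req_dec x u1). auto. destruct (Req_dec x s2). auto. exfalso.
        destruct (Rlt_le_dec x s1). specialize (Hpos x ltac:(lra)). lra. specialize (Hneg x ltac:(lra)). lra. }
      assert (XA : Xf Z (g A) > 0) by (rewrite HA; exact Hx2).
      assert (X0 : Xf Z (g t0) = 0) by (rewrite Ht0; exact Xp).
      assert (XU : Xf Z (g u1) = 0) by (rewrite Hu1; exact Xp).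
      assert (S0' : sw Z (g t') = 0) by lra.
      assert (Ht'' : A <= t' <= s2) by lra. assert (Ht3 : A <= t <= s2) by lra.
      destruct (K t Ht3 S0) as [Q1|[Q1|[Q1|[Q1|Q1]]]]; destruct (K t' Ht'' S0') as [Q2|[Q2|[Q2|[Q2|Q2]]]];
      rewrite ?Q1, ?Q2 in *; first [left; split; reflexivity | right; split; reflexivity | lra].
    -
      assert (Ht1 : A < t < t0 \/ t0 < t < s1).
      { destruct (Req_dec t A). subst t. rewrite HA in Sp. lra. destruct (Req_dec t t0). subst t. lra.
        destruct (Rlt_le_dec t s1). lra. destruct (Req_dec t s1). subst t. lra.
        destruct (Rlt_le_dec t s2). destruct (Req_dec t u1). subst t. rewrite Hu1, <- Ht0 in Sp. lra.
        specialize (Hneg t ltac:(lra)). lra. lra. }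
      assert (Ht2 : A < t' < t0 \/ t0 < t' < s1).
      { rewrite ES in Sp. destruct (Req_dec t' t0). subst t'. lra.
        destruct (Rlt_le_dec t' s1). lra. destruct (Req_dec t' s1). subst t'. lra.
        destruct (Req_dec t' u1). subst t'. rewrite Hu1, <- Ht0 in Sp. lra.
        destruct (Req_dec t' s2). subst t'. lra. specialize (Hneg t' ltac:(lra)). lra. }
      set (nx := fun x => if Rlt_dec x t0 then t0 else s1).
      assert (Hnx : forall x, A < x < t0 \/ t0 < x < s1 -> x < nx x /\ (nx x = t0 \/ nx x = s1) /\
                  (forall r, x < r < nx x -> solves (fX Z) g r /\ sw Z (g r) <> 0) /\ sw Z (g (nx x)) = 0).
      { intros x Hx. unfold nx. destruct (Rlt_dec x t0).
        - split. lra. split. auto. split. intros r0 Hr0. split. apply SX; lra. specialize (Hpos r0 ltac:(lra)). lra.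
          exact Sw0.
        - split. lra. split. auto. split. intros r0 Hr0. split. apply SX; lra. specialize (Hpos r0 ltac:(lra)). lra.
          exact Sw1. }
      destruct (Hnx t Ht1) as [N1 [N1' [N1'' N1''']]]. destruct (Hnx t' Ht2) as [N2 [N2' [N2'' N2''']]].
      destruct (ArcMatch Z g (fX Z) t (nx t) t' (nx t') Hg LX N1 N2 N1'' N2'' N1''' N2''' E) as [D Eg].
      exfalso. destruct N1' as [Q1|Q1]; destruct N2' as [Q2|Q2]; rewrite Q1, Q2 in *; try lra.
      assert (Xf Z (g t0) = Xf Z (g s1)) by (rewrite Eg; reflexivity). rewrite Ht0 in H. lra. }
  unfold LoopData. exists A, t0, s1, u1, s2.
  split. lra. split. lra.
  split.
  { intros t. destruct (cover Z g p t0 s1 u1 s2 u2 HZ Hh HB t) as [t' [Ht' E]].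
    destruct (Rle_dec t' s2). exists t'. split. lra. exact E.
    exists (t' - P). split. unfold A, P; lra. rewrite E. rewrite (Hper (t' - P)) by (unfold A, P; lra).
    f_equal. ring. }
  split. exact HA. split. congruence.
  split.
  { intros t t' Ht Ht' E. destruct (Rtotal_order t t') as [Hl|[He|Hg']].
    destruct (Inj t t' ltac:(lra) ltac:(lra) E) as [[-> ->]|[-> ->]]; tauto. auto.
    destruct (Inj t' t ltac:(lra) ltac:(lra) (eq_sym E)) as [[-> ->]|[-> ->]]; tauto. }
  split. exact Hpos. split. exact Hneg.
  split. rewrite HA; exact Sw2. split. exact Sw0. split. exact Sw1.
  split. exact SX. split. intros t Ht. apply SY. lra.
  split. exact Hx1. split. exact Hy2.
  split. rewrite HA. intros [_ Hs]. nra.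
  split. rewrite Ht0. intros [_ Hs]. rewrite Xp in Hs. lra.
  intros [_ Hs]. nra.
Qed.

Definition orbit (g : R -> pt) : pt -> Prop := fun q => exists t : R, g t = q.

Lemma LD_pos_point Z g A t0 s1 u1 s2 : LoopData Z g A t0 s1 u1 s2 ->
  forall a, orbit g a -> sw Z a >= 0 -> exists t, A <= t <= s1 /\ g t = a.
Proof.
  intros (Ho1&Ho2&Hcov&HA&H0&_&Hpos&Hneg&_) a [t Ht] Hs.
  subst a. destruct (Hcov t) as [t' [Ht' E]]. rewrite E in *.
  destruct (Rle_dec t' s1). exists t'. split. lra. reflexivity.
  destruct (Req_dec t' u1) as [->|]. exists t0. split. lra. exact H0.
  destruct (Req_dec t' s2) as [->|]. exists A. split. lra. exact HA.
  exfalso. specialize (Hneg t' ltac:(lra)). lra.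
Qed.

Lemma LD_neg_point Z g A t0 s1 u1 s2 : LoopData Z g A t0 s1 u1 s2 ->
  forall a, orbit g a -> sw Z a <= 0 -> exists t, s1 <= t <= s2 /\ g t = a.
Proof.
  intros (Ho1&Ho2&Hcov&HA&H0&_&Hpos&Hneg&_) a [t Ht] Hs.
  subst a. destruct (Hcov t) as [t' [Ht' E]]. rewrite E in *.
  destruct (Rle_dec s1 t'). exists t'. split. lra. reflexivity.
  destruct (Req_dec t' t0) as [->|]. exists u1. split. lra. symmetry. exact H0.
  destruct (Req_dec t' A) as [->|]. exists s2. split. lra. symmetry. exact HA.
  exfalso. specialize (Hpos t' ltac:(lra)). lra.
Qed.

Lemma LD_zero_point Z g A t0 s1 u1 s2 : LoopData Z g A t0 s1 u1 s2 ->
  forall a, orbit g a -> sw Z a = 0 -> a = g A \/ a = g t0 \/ a = g s1.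
Proof.
  intros HL a Ha Hs. destruct (LD_pos_point Z g A t0 s1 u1 s2 HL a Ha ltac:(lra)) as [t [Ht E]].
  pose proof HL as (Ho1&Ho2&Hcov&HA&H0&_&Hpos&Hneg&_).
  subst a. destruct (Req_dec t A) as [->|]. auto. destruct (Req_dec t t0) as [->|]. auto.
  destruct (Req_dec t s1) as [->|]. auto. exfalso. specialize (Hpos t ltac:(lra)). lra.
Qed.

Lemma LD_swX Z g A t0 s1 u1 s2 : LoopData Z g A t0 s1 u1 s2 -> forall t, A <= t <= s1 -> sw Z (g t) >= 0.
Proof.
  intros (Ho1&Ho2&Hcov&HA&H0&_&Hpos&Hneg&SA&S0&S1&_) t Ht.
  destruct (Req_dec t A) as [->|]. lra. destruct (Req_dec t t0) as [->|]. lra.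
  destruct (Req_dec t s1) as [->|]. lra. specialize (Hpos t ltac:(lra)). lra.
Qed.

Lemma LD_swY Z g A t0 s1 u1 s2 : LoopData Z g A t0 s1 u1 s2 -> forall t, s1 <= t <= s2 -> sw Z (g t) <= 0.
Proof.
  intros (Ho1&Ho2&Hcov&HA&H0&_&Hpos&Hneg&SA&S0&S1&_) t Ht.
  destruct (Req_dec t u1) as [->|]. rewrite <- H0. lra. destruct (Req_dec t s2) as [->|]. rewrite <- HA. lra.
  destruct (Req_dec t s1) as [->|]. lra. specialize (Hneg t ltac:(lra)). lra.
Qed.

Lemma reachX_time Z g A t0 s1 u1 s2 : is_psvf Z -> global_traj Z g -> LoopData Z g A t0 s1 u1 s2 ->
  forall a b, reach_by (fX Z) (fun _ => True) (fun x => orbit g x /\ sw Z x >= 0) a b <->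
    exists t1 t2, A <= t1 <= t2 /\ t2 <= s1 /\ g t1 = a /\ g t2 = b.
Proof.
  intros HZ Hg HL a b. pose proof HL as (Ho1&Ho2&Hcov&HA&H0&_&Hpos&Hneg&SA&S0&S1&SX&SY&Xs1&_).
  split.
  - intros [T [psi [HT [P0 [PT [HS HC]]]]]].
    destruct (HS 0 ltac:(lra)) as [[Ha Hsa] _]. rewrite P0 in Ha, Hsa.
    destruct (LD_pos_point Z g A t0 s1 u1 s2 HL a Ha Hsa) as [ta [Hta Ea]].
    assert (U : forall m, 0 <= m <= T -> m <= s1 - ta -> psi m = g (m + ta)).
    { intros m Hm Hm'. apply (uniq_fwd (fX Z) psi (fun r => g (r + ta)) 0 m (fieldC1_LocLip _ (XC Z HZ))).
      lra. intros r Hr. split. apply HS; lra. apply shift_cont, (g_cont Z g Hg).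
      intros r Hr. split. apply HC; lra. apply shift_solves. apply SX. lra.
      rewrite P0, Rplus_0_l. symmetry. exact Ea. lra. }
    destruct (Rle_dec T (s1 - ta)).
    + exists ta, (T + ta). split. lra. split. lra. split. exact Ea. rewrite <- PT. symmetry. apply U; lra.
    + exfalso. set (rs := s1 - ta).
      assert (Prs : psi rs = g s1) by (rewrite U by (unfold rs; lra); unfold rs; f_equal; ring).
      destruct (sign_right (sw Z) (fX Z) psi rs (T - rs) (swC Z HZ) (XC Z HZ) ltac:(unfold rs; lra)) as [d [Hd Hd']].
      intros r Hr. apply HS. unfold rs in *; lra.
      intros r Hr. apply HC. unfold rs in *; lra.
      rewrite Prs. exact S1. rewrite Prs. fold (Xf Z). lra.
      pose proof (Rmin_l d (T - rs)). pose proof (Rmin_r d (T - rs)).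
      assert (Rmin d (T - rs) > 0) by (apply Rmin_pos; unfold rs in *; lra).
      set (r := rs + Rmin d (T - rs) / 2).
      specialize (Hd' r ltac:(unfold r; lra)). rewrite Prs in Hd'. fold (Xf Z) in Hd'.
      destruct (HS r ltac:(unfold r, rs in *; lra)) as [[_ Hsr] _]. nra.
  - intros [t1 [t2 [H1 [H2 [E1 E2]]]]].
    exists (t2 - t1), (fun r => g (r + t1)). split. lra. split. rewrite Rplus_0_l. exact E1.
    split. replace (t2 - t1 + t1) with t2 by ring. exact E2.
    split. intros t Ht. split. split. exists (t + t1). reflexivity.
    apply (LD_swX Z g A t0 s1 u1 s2 HL). lra. apply shift_cont, (g_cont Z g Hg).
    intros t Ht. split. exact I. apply shift_solves. apply SX. lra.
Qed.

Lemma reachY_time Z g A t0 s1 u1 s2 : is_psvf Z -> global_traj Z g -> LoopData Z g A t0 s1 u1 s2 ->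
  forall a b, reach_by (fY Z) (fun _ => True) (fun x => orbit g x /\ sw Z x <= 0) a b <->
    exists t1 t2, s1 <= t1 <= t2 /\ t2 <= s2 /\ g t1 = a /\ g t2 = b.
Proof.
  intros HZ Hg HL a b. pose proof HL as (Ho1&Ho2&Hcov&HA&H0&_&Hpos&Hneg&SA&S0&S1&SX&SY&Xs1&Ys2&_).
  assert (S2 : sw Z (g s2) = 0) by (rewrite <- HA; exact SA).
  split.
  - intros [T [psi [HT [P0 [PT [HS HC]]]]]].
    destruct (HS 0 ltac:(lra)) as [[Ha Hsa] _]. rewrite P0 in Ha, Hsa.
    destruct (LD_neg_point Z g A t0 s1 u1 s2 HL a Ha Hsa) as [ta [Hta Ea]].
    assert (U : forall m, 0 <= m <= T -> m <= s2 - ta -> psi m = g (m + ta)).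
    { intros m Hm Hm'. apply (uniq_fwd (fY Z) psi (fun r => g (r + ta)) 0 m (fieldC1_LocLip _ (YC Z HZ))).
      lra. intros r Hr. split. apply HS; lra. apply shift_cont, (g_cont Z g Hg).
      intros r Hr. split. apply HC; lra. apply shift_solves. apply SY. lra.
      rewrite P0, Rplus_0_l. symmetry. exact Ea. lra. }
    destruct (Rle_dec T (s2 - ta)).
    + exists ta, (T + ta). split. lra. split. lra. split. exact Ea. rewrite <- PT. symmetry. apply U; lra.
    + exfalso. set (rs := s2 - ta).
      assert (Prs : psi rs = g s2) by (rewrite U by (unfold rs; lra); unfold rs; f_equal; ring).
      destruct (sign_right (sw Z) (fY Z) psi rs (T - rs) (swC Z HZ) (YC Z HZ) ltac:(unfold rs; lra)) as [d [Hd Hd']].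
      intros r Hr. apply HS. unfold rs in *; lra.
      intros r Hr. apply HC. unfold rs in *; lra.
      rewrite Prs. exact S2. rewrite Prs. fold (Yf Z). lra.
      pose proof (Rmin_l d (T - rs)). pose proof (Rmin_r d (T - rs)).
      assert (Rmin d (T - rs) > 0) by (apply Rmin_pos; unfold rs in *; lra).
      set (r := rs + Rmin d (T - rs) / 2).
      specialize (Hd' r ltac:(unfold r; lra)). rewrite Prs in Hd'. fold (Yf Z) in Hd'.
      destruct (HS r ltac:(unfold r, rs in *; lra)) as [[_ Hsr] _]. nra.
  - intros [t1 [t2 [H1 [H2 [E1 E2]]]]].
    exists (t2 - t1), (fun r => g (r + t1)). split. lra. split. rewrite Rplus_0_l. exact E1.
    split. replace (t2 - t1 + t1) with t2 by ring. exact E2.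
    split. intros t Ht. split. split. exists (t + t1). reflexivity.
    apply (LD_swY Z g A t0 s1 u1 s2 HL). lra. apply shift_cont, (g_cont Z g Hg).
    intros t Ht. split. exact I. destruct (Req_dec (t + t1) s1) as [E|NE].
    exfalso. lra. apply shift_solves. apply SY. lra.
Qed.

Lemma cont_at_const (q : pt) t : cont_at (fun _ => q) t.
Proof. split; apply continuous_const. Qed.

Lemma reachZT_time Z g A t0 s1 u1 s2 : LoopData Z g A t0 s1 u1 s2 ->
  forall a b, reach_by (ZT Z) (slide_esc Z) (fun x => orbit g x /\ sw Z x = 0) a b <->
    a = b /\ orbit g a /\ sw Z a = 0.
Proof.
  intros HL a b. pose proof HL as (_&_&_&_&_&_&_&_&_&_&_&_&_&_&_&NA&N0&N1).
  split.
  - intros [T [psi [HT [P0 [PT [HS HC]]]]]].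
    destruct (Req_dec T 0) as [->|HT0].
    + rewrite <- P0, <- PT. split. reflexivity. apply HS. lra.
    + exfalso. destruct (HC (T / 2) ltac:(lra)) as [Hsl _].
      destruct (HS (T / 2) ltac:(lra)) as [[Ho Hs] _].
      destruct (LD_zero_point Z g A t0 s1 u1 s2 HL _ Ho Hs) as [E|[E|E]]; rewrite E in Hsl; auto.
  - intros [<- [Ho Hs]]. exists 0, (fun _ => a). split. lra. split. reflexivity. split. reflexivity.
    split. intros t Ht. split. split; assumption. apply cont_at_const. intros t Ht. lra.
Qed.

Definition cl (v : R) : R := Rmin (Rmax v 0) (1/2).
Lemma cl_low v : v <= 0 -> cl v = 0.
Proof. intro. unfold cl, Rmin, Rmax. repeat destruct Rle_dec; lra. Qed.
Lemma cl_high v : v >= 1/2 -> cl v = 1/2.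
Proof. intro. unfold cl, Rmin, Rmax. repeat destruct Rle_dec; lra. Qed.
Lemma cl_mid v : 0 <= v <= 1/2 -> cl v = v.
Proof. intro. unfold cl, Rmin, Rmax. repeat destruct Rle_dec; lra. Qed.
Lemma cl_mono a b : a <= b -> 0 <= cl b - cl a <= b - a.
Proof. intro. unfold cl, Rmin, Rmax. repeat destruct Rle_dec; lra. Qed.

Definition phi5 (A t0 s1 u1 s2 : R) (th : R) : R :=
  A + 2 * (t0 - A) * cl (th + 1/2) + 2 * (s1 - t0) * cl th + 2 * (u1 - s1) * cl (th - 1/2)
    + 2 * (s2 - u1) * cl (th - 1).

Definition knot (th : R) := th = -1/2 \/ th = 0 \/ th = 1/2 \/ th = 1 \/ th = 3/2.
Definition eqrel (a b : R) := a = b \/ (a = -1/2 /\ b = 3/2) \/ (a = 3/2 /\ b = -1/2) \/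
  (a = 0 /\ b = 1) \/ (a = 1 /\ b = 0).


Lemma phi5_knots A t0 s1 u1 s2 :
  phi5 A t0 s1 u1 s2 (-1/2) = A /\ phi5 A t0 s1 u1 s2 0 = t0 /\ phi5 A t0 s1 u1 s2 (1/2) = s1 /\
  phi5 A t0 s1 u1 s2 1 = u1 /\ phi5 A t0 s1 u1 s2 (3/2) = s2.
Proof.
  unfold phi5. split; [|split; [|split; [|split]]].
  - rewrite (cl_mid (-1/2 + 1/2)), (cl_low (-1/2)), (cl_low (-1/2 - 1/2)), (cl_low (-1/2 - 1)) by lra. field.
  - rewrite (cl_high (0 + 1/2)), (cl_mid 0), (cl_low (0 - 1/2)), (cl_low (0 - 1)) by lra. field.
  - rewrite (cl_high (1/2 + 1/2)), (cl_high (1/2)), (cl_mid (1/2 - 1/2)), (cl_low (1/2 - 1)) by lra. field.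
  - rewrite (cl_high (1 + 1/2)), (cl_high 1), (cl_high (1 - 1/2)), (cl_mid (1 - 1)) by lra. field.
  - rewrite (cl_high (3/2 + 1/2)), (cl_high (3/2)), (cl_high (3/2 - 1/2)), (cl_high (3/2 - 1)) by lra. field.
Qed.

Lemma phi5_mono A t0 s1 u1 s2 a b : A < t0 -> t0 < s1 -> s1 < u1 -> u1 < s2 ->
  -1/2 <= a -> a < b -> b <= 3/2 -> phi5 A t0 s1 u1 s2 a < phi5 A t0 s1 u1 s2 b.
Proof.
  intros H1 H2 H3 H4 Ha Hab Hb.
  set (m := Rmin (Rmin (t0 - A) (s1 - t0)) (Rmin (u1 - s1) (s2 - u1))).
  assert (Hm : m > 0) by (unfold m; repeat apply Rmin_pos; lra).
  assert (Hm' : m <= t0 - A /\ m <= s1 - t0 /\ m <= u1 - s1 /\ m <= s2 - u1).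
  { unfold m. pose proof (Rmin_l (Rmin (t0 - A) (s1 - t0)) (Rmin (u1 - s1) (s2 - u1))).
    pose proof (Rmin_r (Rmin (t0 - A) (s1 - t0)) (Rmin (u1 - s1) (s2 - u1))).
    pose proof (Rmin_l (t0 - A) (s1 - t0)). pose proof (Rmin_r (t0 - A) (s1 - t0)).
    pose proof (Rmin_l (u1 - s1) (s2 - u1)). pose proof (Rmin_r (u1 - s1) (s2 - u1)). lra. }
  assert (Hsum : forall th, -1/2 <= th <= 3/2 -> cl (th + 1/2) + cl th + cl (th - 1/2) + cl (th - 1) = th + 1/2).
  { intros th Hth. destruct (Rle_dec th 0).
    rewrite (cl_mid (th + 1/2)), (cl_low th), (cl_low (th - 1/2)), (cl_low (th - 1)) by lra. lra.
    destruct (Rle_dec th (1/2)).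
    rewrite (cl_high (th + 1/2)), (cl_mid th), (cl_low (th - 1/2)), (cl_low (th - 1)) by lra. lra.
    destruct (Rle_dec th 1).
    rewrite (cl_high (th + 1/2)), (cl_high th), (cl_mid (th - 1/2)), (cl_low (th - 1)) by lra. lra.
    rewrite (cl_high (th + 1/2)), (cl_high th), (cl_high (th - 1/2)), (cl_mid (th - 1)) by lra. lra. }
  pose proof (Hsum a ltac:(lra)). pose proof (Hsum b ltac:(lra)).
  pose proof (cl_mono (a + 1/2) (b + 1/2) ltac:(lra)). pose proof (cl_mono a b ltac:(lra)).
  pose proof (cl_mono (a - 1/2) (b - 1/2) ltac:(lra)). pose proof (cl_mono (a - 1) (b - 1) ltac:(lra)).
  unfold phi5.
  assert (K : forall c d, c >= m -> 0 <= d -> m * d <= c * d) by (intros; apply Rmult_le_compat_r; lra).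
  pose proof (K (t0 - A) (cl (b + 1/2) - cl (a + 1/2)) ltac:(lra) ltac:(lra)).
  pose proof (K (s1 - t0) (cl b - cl a) ltac:(lra) ltac:(lra)).
  pose proof (K (u1 - s1) (cl (b - 1/2) - cl (a - 1/2)) ltac:(lra) ltac:(lra)).
  pose proof (K (s2 - u1) (cl (b - 1) - cl (a - 1)) ltac:(lra) ltac:(lra)).
  assert (m * (b - a) > 0) by (apply Rmult_lt_0_compat; lra).
  nra.
Qed.

Lemma phi5_lip A t0 s1 u1 s2 a b : A < t0 -> t0 < s1 -> s1 < u1 -> u1 < s2 ->
  Rabs (phi5 A t0 s1 u1 s2 b - phi5 A t0 s1 u1 s2 a) <= 2 * (s2 - A) * Rabs (b - a).
Proof.
  intros H1 H2 H3 H4.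
  assert (G : forall x y, x <= y -> Rabs (phi5 A t0 s1 u1 s2 y - phi5 A t0 s1 u1 s2 x) <= 2 * (s2 - A) * (y - x)).
  { intros x y Hxy.
    pose proof (cl_mono (x + 1/2) (y + 1/2) ltac:(lra)). pose proof (cl_mono x y ltac:(lra)).
    pose proof (cl_mono (x - 1/2) (y - 1/2) ltac:(lra)). pose proof (cl_mono (x - 1) (y - 1) ltac:(lra)).
    assert (K : forall c d, c > 0 -> 0 <= d <= y - x -> 0 <= c * d <= c * (y - x)).
    { intros c d Hc Hd. split. apply Rmult_le_pos; lra. apply Rmult_le_compat_l; lra. }
    pose proof (K (2 * (t0 - A)) (cl (y + 1/2) - cl (x + 1/2)) ltac:(lra) ltac:(lra)).
    pose proof (K (2 * (s1 - t0)) (cl y - cl x) ltac:(lra) ltac:(lra)).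
    pose proof (K (2 * (u1 - s1)) (cl (y - 1/2) - cl (x - 1/2)) ltac:(lra) ltac:(lra)).
    pose proof (K (2 * (s2 - u1)) (cl (y - 1) - cl (x - 1)) ltac:(lra) ltac:(lra)).
    unfold phi5. rewrite Rabs_pos_eq; lra. }
  destruct (Rle_dec a b). rewrite (Rabs_pos_eq (b - a)) by lra. apply G; lra.
  rewrite <- Rabs_Ropp. replace (- (phi5 A t0 s1 u1 s2 b - phi5 A t0 s1 u1 s2 a)) with
    (phi5 A t0 s1 u1 s2 a - phi5 A t0 s1 u1 s2 b) by ring.
  rewrite (Rabs_left (b - a)) by lra. replace (- (b - a)) with (a - b) by ring. apply G; lra.
Qed.

Lemma phi5_cont A t0 s1 u1 s2 th : A < t0 -> t0 < s1 -> s1 < u1 -> u1 < s2 ->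
  continuity_pt (phi5 A t0 s1 u1 s2) th.
Proof.
  intros H1 H2 H3 H4. apply eps_cpt. intros eps He.
  exists (eps / (2 * (s2 - A) + 1)). split. apply Rdiv_lt_0_compat; lra.
  intros s Hs. eapply Rle_lt_trans. apply phi5_lip; auto.
  assert (Hp : 2 * (s2 - A) + 1 > 0) by lra.
  apply Rle_lt_trans with ((2 * (s2 - A) + 1) * Rabs (s - th)).
  apply Rmult_le_compat_r. apply Rabs_pos. lra.
  apply Rmult_lt_reg_l with (/ (2 * (s2 - A) + 1)). apply Rinv_0_lt_compat; lra.
  rewrite <- Rmult_assoc, Rinv_l, Rmult_1_l by lra. unfold Rdiv in Hs. lra.
Qed.

Lemma phi5_onto A t0 s1 u1 s2 tau : A < t0 -> t0 < s1 -> s1 < u1 -> u1 < s2 ->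
  A <= tau <= s2 -> exists th, -1/2 <= th <= 3/2 /\ phi5 A t0 s1 u1 s2 th = tau.
Proof.
  intros H1 H2 H3 H4 Ht. destruct (phi5_knots A t0 s1 u1 s2) as [K1 [_ [_ [_ K5]]]].
  destruct (Req_dec tau A) as [->|NA]. exists (-1/2). split. lra. exact K1.
  destruct (Req_dec tau s2) as [->|NB]. exists (3/2). split. lra. exact K5.
  destruct (IVT (fun th => phi5 A t0 s1 u1 s2 th - tau) (-1/2) (3/2)) as [z [Hz Ez]].
  intros a. apply ccomb_minus. apply phi5_cont; auto. apply continuity_pt_const. intros x y; reflexivity.
  lra. simpl. rewrite K1. lra. simpl. rewrite K5. lra.
  exists z. split. exact Hz. simpl in Ez. lra.
Qed.

Lemma phi5_inj A t0 s1 u1 s2 a b : A < t0 -> t0 < s1 -> s1 < u1 -> u1 < s2 ->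
  -1/2 <= a <= 3/2 -> -1/2 <= b <= 3/2 -> phi5 A t0 s1 u1 s2 a = phi5 A t0 s1 u1 s2 b -> a = b.
Proof.
  intros H1 H2 H3 H4 Ha Hb E. destruct (Rtotal_order a b) as [L|[Q|G]]. 2: exact Q.
  pose proof (phi5_mono A t0 s1 u1 s2 a b H1 H2 H3 H4 ltac:(lra) L ltac:(lra)). lra.
  pose proof (phi5_mono A t0 s1 u1 s2 b a H1 H2 H3 H4 ltac:(lra) G ltac:(lra)). lra.
Qed.

Lemma phi5_le A t0 s1 u1 s2 a b : A < t0 -> t0 < s1 -> s1 < u1 -> u1 < s2 ->
  -1/2 <= a <= 3/2 -> -1/2 <= b <= 3/2 -> (a <= b <-> phi5 A t0 s1 u1 s2 a <= phi5 A t0 s1 u1 s2 b).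
Proof.
  intros H1 H2 H3 H4 Ha Hb. split.
  - intro. destruct (Req_dec a b) as [->|]. lra. left. apply phi5_mono; auto; lra.
  - intro. destruct (Rle_dec a b). auto. exfalso.
    pose proof (phi5_mono A t0 s1 u1 s2 b a H1 H2 H3 H4 ltac:(lra) ltac:(lra) ltac:(lra)). lra.
Qed.

Lemma phi5_range A t0 s1 u1 s2 a : A < t0 -> t0 < s1 -> s1 < u1 -> u1 < s2 ->
  -1/2 <= a <= 3/2 -> A <= phi5 A t0 s1 u1 s2 a <= s2.
Proof.
  intros H1 H2 H3 H4 Ha. destruct (phi5_knots A t0 s1 u1 s2) as [K1 [_ [_ [_ K5]]]].
  pose proof (proj1 (phi5_le A t0 s1 u1 s2 (-1/2) a H1 H2 H3 H4 ltac:(lra) Ha) ltac:(lra)).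
  pose proof (proj1 (phi5_le A t0 s1 u1 s2 a (3/2) H1 H2 H3 H4 Ha ltac:(lra)) ltac:(lra)).
  lra.
Qed.

Definition Hf (g : R -> pt) A t0 s1 u1 s2 (th : R) : pt := g (phi5 A t0 s1 u1 s2 th).

Lemma LD_order Z g A t0 s1 u1 s2 : LoopData Z g A t0 s1 u1 s2 -> A < t0 /\ t0 < s1 /\ s1 < u1 /\ u1 < s2.
Proof. intros (H1&H2&_). lra. Qed.

Lemma H_cont Z g A t0 s1 u1 s2 : global_traj Z g -> LoopData Z g A t0 s1 u1 s2 ->
  forall th, cont_at (Hf g A t0 s1 u1 s2) th.
Proof.
  intros Hg HL th. destruct (LD_order Z g A t0 s1 u1 s2 HL) as (O1&O2&O3&O4).
  pose proof (g_cont Z g Hg (phi5 A t0 s1 u1 s2 th)) as Hc. apply cont_at_iff in Hc as [C1 C2].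
  apply cont_at_iff. unfold Hf. split.
  apply (continuity_pt_comp (phi5 A t0 s1 u1 s2) (fun s => fst (g s))). apply phi5_cont; auto. exact C1.
  apply (continuity_pt_comp (phi5 A t0 s1 u1 s2) (fun s => snd (g s))). apply phi5_cont; auto. exact C2.
Qed.

Lemma H_cover Z g A t0 s1 u1 s2 : LoopData Z g A t0 s1 u1 s2 ->
  forall q, orbit g q <-> exists th, -1/2 <= th <= 3/2 /\ Hf g A t0 s1 u1 s2 th = q.
Proof.
  intros HL q. pose proof HL as (_&_&Hcov&_). destruct (LD_order Z g A t0 s1 u1 s2 HL) as (O1&O2&O3&O4).
  split.
  - intros [t Ht]. destruct (Hcov t) as [t' [Ht' E]].
    destruct (phi5_onto A t0 s1 u1 s2 t' O1 O2 O3 O4 Ht') as [th [Hth Eth]].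
    exists th. split. exact Hth. unfold Hf. rewrite Eth, <- E. exact Ht.
  - intros [th [_ E]]. exists (phi5 A t0 s1 u1 s2 th). exact E.
Qed.

Lemma H_eq Z g A t0 s1 u1 s2 : LoopData Z g A t0 s1 u1 s2 ->
  forall a b, -1/2 <= a <= 3/2 -> -1/2 <= b <= 3/2 ->
  (Hf g A t0 s1 u1 s2 a = Hf g A t0 s1 u1 s2 b <-> eqrel a b).
Proof.
  intros HL a b Ha Hb. pose proof HL as (_&_&_&HA&H0&Hinj&_).
  destruct (LD_order Z g A t0 s1 u1 s2 HL) as (O1&O2&O3&O4).
  destruct (phi5_knots A t0 s1 u1 s2) as [K1 [K2 [K3 [K4 K5]]]].
  assert (I : forall x y, -1/2 <= x <= 3/2 -> -1/2 <= y <= 3/2 -> phi5 A t0 s1 u1 s2 x = phi5 A t0 s1 u1 s2 y -> x = y)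
    by (intros x y Hx Hy E; apply (phi5_inj A t0 s1 u1 s2 x y O1 O2 O3 O4 Hx Hy E)).
  pose proof (phi5_range A t0 s1 u1 s2 a O1 O2 O3 O4 Ha) as Ra.
  pose proof (phi5_range A t0 s1 u1 s2 b O1 O2 O3 O4 Hb) as Rb.
  unfold Hf, eqrel. split.
  - intro E. destruct (Hinj _ _ Ra Rb E) as [E1|[[E1 E2]|[[E1 E2]|[[E1 E2]|[E1 E2]]]]].
    + left. apply I; auto.
    + right; left. split; apply I; auto; lra.
    + right; right; left. split; apply I; auto; lra.
    + right; right; right; left. split; apply I; auto; lra.
    + right; right; right; right. split; apply I; auto; lra.
  - intros [->|[[-> ->]|[[-> ->]|[[-> ->]|[-> ->]]]]].
    reflexivity. rewrite K1, K5. exact HA. rewrite K1, K5. symmetry. exact HA.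
    rewrite K2, K4. exact H0. rewrite K2, K4. symmetry. exact H0.
Qed.

Lemma H_sw Z g A t0 s1 u1 s2 : LoopData Z g A t0 s1 u1 s2 ->
  forall a, -1/2 <= a <= 3/2 -> (sw Z (Hf g A t0 s1 u1 s2 a) = 0 <-> knot a).
Proof.
  intros HL a Ha. pose proof HL as (_&_&_&HA&H0&_&Hpos&Hneg&SA&S0&S1&_).
  destruct (LD_order Z g A t0 s1 u1 s2 HL) as (O1&O2&O3&O4).
  destruct (phi5_knots A t0 s1 u1 s2) as [K1 [K2 [K3 [K4 K5]]]].
  unfold Hf, knot. split.
  - intro E. set (t := phi5 A t0 s1 u1 s2 a) in *.
    assert (Le : forall b, -1/2 <= b <= 3/2 -> (a <= b <-> t <= phi5 A t0 s1 u1 s2 b)) by (intros; apply phi5_le; auto).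
    assert (Ge : forall b, -1/2 <= b <= 3/2 -> (b <= a <-> phi5 A t0 s1 u1 s2 b <= t)) by (intros; apply phi5_le; auto).
    pose proof (Le (-1/2) ltac:(lra)) as L1. pose proof (Le 0 ltac:(lra)) as L2. pose proof (Le (1/2) ltac:(lra)) as L3.
    pose proof (Le 1 ltac:(lra)) as L4. pose proof (Le (3/2) ltac:(lra)) as L5.
    pose proof (Ge (-1/2) ltac:(lra)) as G1. pose proof (Ge 0 ltac:(lra)) as G2. pose proof (Ge (1/2) ltac:(lra)) as G3.
    pose proof (Ge 1 ltac:(lra)) as G4. pose proof (Ge (3/2) ltac:(lra)) as G5.
    rewrite K1 in L1, G1. rewrite K2 in L2, G2. rewrite K3 in L3, G3. rewrite K4 in L4, G4. rewrite K5 in L5, G5.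
    destruct (Rle_dec t A). left. destruct L1, G1. lra.
    destruct (Rlt_le_dec t t0). exfalso. specialize (Hpos t ltac:(lra)). lra.
    destruct (Req_dec t t0). right; left. destruct L2, G2. lra.
    destruct (Rlt_le_dec t s1). exfalso. specialize (Hpos t ltac:(lra)). lra.
    destruct (Req_dec t s1). right; right; left. destruct L3, G3. lra.
    destruct (Rlt_le_dec t u1). exfalso. specialize (Hneg t ltac:(lra)). lra.
    destruct (Req_dec t u1). right; right; right; left. destruct L4, G4. lra.
    destruct (Rlt_le_dec t s2). exfalso. specialize (Hneg t ltac:(lra)). lra.
    right; right; right; right. destruct L5, G5. lra.
  - intros [-> | [-> | [-> | [-> | ->]]]].
    rewrite K1; exact SA. rewrite K2; exact S0. rewrite K3; exact S1. rewrite K4, <- H0; exact S0.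
    rewrite K5, <- HA; exact SA.
Qed.

Lemma H_reachX Z g A t0 s1 u1 s2 : is_psvf Z -> global_traj Z g -> LoopData Z g A t0 s1 u1 s2 ->
  forall a b, reach_by (fX Z) (fun _ => True) (fun x => orbit g x /\ sw Z x >= 0) a b <->
    exists th1 th2, -1/2 <= th1 <= th2 /\ th2 <= 1/2 /\
      Hf g A t0 s1 u1 s2 th1 = a /\ Hf g A t0 s1 u1 s2 th2 = b.
Proof.
  intros HZ Hg HL a b. rewrite (reachX_time Z g A t0 s1 u1 s2 HZ Hg HL).
  destruct (LD_order Z g A t0 s1 u1 s2 HL) as (O1&O2&O3&O4).
  destruct (phi5_knots A t0 s1 u1 s2) as [K1 [K2 [K3 [K4 K5]]]].
  split.
  - intros [t1 [t2 [H1 [H2 [E1 E2]]]]].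
    destruct (phi5_onto A t0 s1 u1 s2 t1 O1 O2 O3 O4 ltac:(lra)) as [a1 [Ha1 Ea1]].
    destruct (phi5_onto A t0 s1 u1 s2 t2 O1 O2 O3 O4 ltac:(lra)) as [a2 [Ha2 Ea2]].
    exists a1, a2. unfold Hf. rewrite Ea1, Ea2.
    assert (a1 <= a2) by (apply (phi5_le A t0 s1 u1 s2); auto; lra).
    assert (a2 <= 1/2). { apply (phi5_le A t0 s1 u1 s2); auto; lra. }
    repeat split; auto; lra.
  - intros [a1 [a2 [H1 [H2 [E1 E2]]]]]. exists (phi5 A t0 s1 u1 s2 a1), (phi5 A t0 s1 u1 s2 a2).
    assert (phi5 A t0 s1 u1 s2 (-1/2) <= phi5 A t0 s1 u1 s2 a1) by (apply phi5_le; auto; lra).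
    assert (phi5 A t0 s1 u1 s2 a1 <= phi5 A t0 s1 u1 s2 a2) by (apply phi5_le; auto; lra).
    assert (phi5 A t0 s1 u1 s2 a2 <= phi5 A t0 s1 u1 s2 (1/2)) by (apply phi5_le; auto; lra).
    repeat split; auto; lra.
Qed.

Lemma H_reachY Z g A t0 s1 u1 s2 : is_psvf Z -> global_traj Z g -> LoopData Z g A t0 s1 u1 s2 ->
  forall a b, reach_by (fY Z) (fun _ => True) (fun x => orbit g x /\ sw Z x <= 0) a b <->
    exists th1 th2, 1/2 <= th1 <= th2 /\ th2 <= 3/2 /\
      Hf g A t0 s1 u1 s2 th1 = a /\ Hf g A t0 s1 u1 s2 th2 = b.
Proof.
  intros HZ Hg HL a b. rewrite (reachY_time Z g A t0 s1 u1 s2 HZ Hg HL).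
  destruct (LD_order Z g A t0 s1 u1 s2 HL) as (O1&O2&O3&O4).
  destruct (phi5_knots A t0 s1 u1 s2) as [K1 [K2 [K3 [K4 K5]]]].
  split.
  - intros [t1 [t2 [H1 [H2 [E1 E2]]]]].
    destruct (phi5_onto A t0 s1 u1 s2 t1 O1 O2 O3 O4 ltac:(lra)) as [a1 [Ha1 Ea1]].
    destruct (phi5_onto A t0 s1 u1 s2 t2 O1 O2 O3 O4 ltac:(lra)) as [a2 [Ha2 Ea2]].
    exists a1, a2. unfold Hf. rewrite Ea1, Ea2.
    assert (a1 <= a2) by (apply (phi5_le A t0 s1 u1 s2); auto; lra).
    assert (1/2 <= a1). { apply (phi5_le A t0 s1 u1 s2); auto; lra. }
    repeat split; auto; lra.
  - intros [a1 [a2 [H1 [H2 [E1 E2]]]]]. exists (phi5 A t0 s1 u1 s2 a1), (phi5 A t0 s1 u1 s2 a2).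
    assert (phi5 A t0 s1 u1 s2 (1/2) <= phi5 A t0 s1 u1 s2 a1) by (apply phi5_le; auto; lra).
    assert (phi5 A t0 s1 u1 s2 a1 <= phi5 A t0 s1 u1 s2 a2) by (apply phi5_le; auto; lra).
    assert (phi5 A t0 s1 u1 s2 a2 <= phi5 A t0 s1 u1 s2 (3/2)) by (apply phi5_le; auto; lra).
    repeat split; auto; lra.
Qed.

Definition F2 (x : R) : R := x ^ 2 / 4 - x ^ 4.
Definition G2 (th : R) : pt :=
  let x := 1/2 - Rabs (th - 1/2) in (x, x * x * (1/2 + x) * (1/2 - th)).
Definition sig2 (q : pt) : R := if Rle_dec 0 (snd q) then fst q else 1 - fst q.

Lemma G2_low th : th <= 1/2 -> G2 th = (th, F2 th).
Proof.
  intro H. unfold G2, F2. rewrite Rabs_left1 by lra. f_equal; field.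
Qed.
Lemma G2_high th : th >= 1/2 -> G2 th = (1 - th, - F2 (1 - th)).
Proof.
  intro H. unfold G2, F2. rewrite Rabs_pos_eq by lra. f_equal; field.
Qed.

Lemma F2_nonneg x : -1/2 <= x <= 1/2 -> F2 x >= 0.
Proof. intro. unfold F2. assert (x * x <= 1/4) by nra. nra. Qed.

Lemma F2_zero x : F2 x = 0 -> x = 0 \/ x = 1/2 \/ x = -1/2.
Proof.
  intro H. unfold F2 in H. assert (E : x * x * ((1/2 - x) * (1/2 + x)) = 0) by (rewrite <- H; field).
  apply Rmult_integral in E as [E|E]. apply Rmult_integral in E as [E|E]; auto.
  apply Rmult_integral in E as [E|E]. right; left; lra. right; right; lra.
Qed.

Lemma G2_cont th : cont_at G2 th.
Proof.
  apply cont_at_iff. unfold G2. simpl. split.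
  - apply ccomb_minus. apply continuity_pt_const. intros a b; reflexivity.
    apply (continuity_pt_comp (fun t => t - 1/2) Rabs). apply ccomb_minus. apply continuity_pt_id.
    apply continuity_pt_const. intros a b; reflexivity. apply Rcontinuity_abs.
  - assert (Cx : continuity_pt (fun t => 1/2 - Rabs (t - 1/2)) th).
    { apply ccomb_minus. apply continuity_pt_const. intros a b; reflexivity.
      apply (continuity_pt_comp (fun t => t - 1/2) Rabs). apply ccomb_minus. apply continuity_pt_id.
      apply continuity_pt_const. intros a b; reflexivity. apply Rcontinuity_abs. }
    repeat apply ccomb_mult; try exact Cx.
    apply ccomb_plus. apply continuity_pt_const. intros a b; reflexivity. exact Cx.
    apply ccomb_minus. apply continuity_pt_const. intros a b; reflexivity. apply continuity_pt_id.
Qed.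

Lemma G2_in th : -1/2 <= th <= 3/2 -> Lambda2 (G2 th).
Proof.
  intro H. unfold Lambda2. destruct (Rle_dec th (1/2)).
  - rewrite G2_low by lra. simpl. split. lra. left. reflexivity.
  - rewrite G2_high by lra. simpl. split. lra. right. reflexivity.
Qed.

Lemma L2_upper q : Lambda2 q -> snd q >= 0 -> G2 (fst q) = q.
Proof.
  intros [Hx Hy] Hs. rewrite G2_low by lra. destruct q as [x y]. simpl in *. f_equal.
  pose proof (F2_nonneg x Hx). unfold F2 in *. destruct Hy; lra.
Qed.
Lemma L2_lower q : Lambda2 q -> snd q <= 0 -> G2 (1 - fst q) = q.
Proof.
  intros [Hx Hy] Hs. rewrite G2_high by lra. destruct q as [x y]. simpl in *.
  replace (1 - (1 - x)) with x by ring. f_equal.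
  pose proof (F2_nonneg x Hx). unfold F2 in *. destruct Hy; lra.
Qed.

Lemma sig2_ok q : Lambda2 q -> -1/2 <= sig2 q <= 3/2 /\ G2 (sig2 q) = q.
Proof.
  intros Hq. pose proof Hq as [Hx _]. unfold sig2. destruct (Rle_dec 0 (snd q)).
  split. lra. apply L2_upper; auto; lra.
  split. lra. apply L2_lower; auto; lra.
Qed.

Lemma G2_eq a b : -1/2 <= a <= 3/2 -> -1/2 <= b <= 3/2 -> (G2 a = G2 b <-> eqrel a b).
Proof.
  intros Ha Hb. unfold eqrel. split.
  - intro E. destruct (Rle_dec a (1/2)); destruct (Rle_dec b (1/2)).
    + rewrite G2_low, G2_low in E by lra. injection E; intros; left; lra.
    + rewrite G2_low in E by lra. rewrite G2_high in E by lra. injection E as E1 E2.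
      assert (F2 a = 0) by (rewrite <- E1 in E2; lra).
      destruct (F2_zero a H) as [Z|[Z|Z]]; subst a. right; right; right; left; split; lra. left; lra. right; left; split; lra.
    + rewrite G2_high in E by lra. rewrite G2_low in E by lra. injection E as E1 E2.
      assert (F2 b = 0) by (rewrite E1 in E2; lra).
      destruct (F2_zero b H) as [Z|[Z|Z]]; subst b. right; right; right; right; split; lra. left; lra. right; right; left; split; lra.
    + rewrite G2_high, G2_high in E by lra. injection E; intros; left; lra.
  - intros [->|[[-> ->]|[[-> ->]|[[-> ->]|[-> ->]]]]]. reflexivity.
    all: rewrite ?(G2_low (-1/2)), ?(G2_high (3/2)), ?(G2_low 0), ?(G2_high 1) by lra; unfold F2; f_equal; field.
Qed.

Lemma G2_sw a : -1/2 <= a <= 3/2 -> (snd (G2 a) = 0 <-> knot a).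
Proof.
  intros Ha. unfold knot. split.
  - intro E. destruct (Rle_dec a (1/2)).
    + rewrite G2_low in E by lra. simpl in E. destruct (F2_zero a E) as [Z|[Z|Z]]; lra.
    + rewrite G2_high in E by lra. simpl in E. assert (F2 (1 - a) = 0) by lra.
      destruct (F2_zero _ H) as [Z|[Z|Z]]; lra.
  - intros [-> | [-> | [-> | [-> | ->]]]].
    all: rewrite ?(G2_low (-1/2)), ?(G2_low 0), ?(G2_low (1/2)), ?(G2_high 1), ?(G2_high (3/2)) by lra;
      simpl; unfold F2; field.
Qed.

Lemma Z2_Xf q : Xf Z2 q = fst q / 2 - 4 * fst q ^ 3.
Proof.
  unfold Xf, lie, dx, dy, Z2. simpl. rewrite Derive_const.
  replace (Derive (fun y : R => y) (snd q)) with 1. ring. symmetry. apply Derive_id.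
Qed.
Lemma Z2_Yf q : Yf Z2 q = fst q / 2 - 4 * fst q ^ 3.
Proof.
  unfold Yf, lie, dx, dy, Z2. simpl. rewrite Derive_const.
  replace (Derive (fun y : R => y) (snd q)) with 1. ring. symmetry. apply Derive_id.
Qed.

Lemma fst_path (psi : R -> pt) T v : 0 <= T -> (forall t, 0 <= t <= T -> cont_at psi t) ->
  (forall t, 0 < t < T -> is_derive (fun s => fst (psi s)) t v) -> fst (psi T) - fst (psi 0) = v * T.
Proof.
  intros HT Hc Hd. destruct (MVT_gen (fun s => fst (psi s)) 0 T (fun _ => v)) as [c [_ E]].
  rewrite Rmin_left, Rmax_right by lra. intros x Hx. apply Hd. lra.
  rewrite Rmin_left, Rmax_right by lra. intros x Hx. apply (proj1 (cont_at_iff _ _) (Hc x Hx)).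
  simpl in E. lra.
Qed.

Lemma Z2_reachX a b : Lambda2 a -> Lambda2 b ->
  (reach_by (fX Z2) (fun _ => True) (fun x => Lambda2 x /\ sw Z2 x >= 0) a b <->
   exists th1 th2, -1/2 <= th1 <= th2 /\ th2 <= 1/2 /\ G2 th1 = a /\ G2 th2 = b).
Proof.
  intros Ha Hb. split.
  - intros [T [psi [HT [P0 [PT [HS HC]]]]]].
    assert (E : fst (psi T) - fst (psi 0) = 1 * T).
    { apply fst_path. exact HT. intros t Ht. apply HS. exact Ht.
      intros t Ht. destruct (HC t Ht) as [_ [D _]]. exact D. }
    destruct (HS 0 ltac:(lra)) as [[_ S0] _]. destruct (HS T ltac:(lra)) as [[_ ST] _].
    rewrite P0 in S0, E. rewrite PT in ST, E. simpl in S0, ST.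
    exists (fst a), (fst b). pose proof Ha as [Hxa _]. pose proof Hb as [Hxb _].
    split. lra. split. lra. split; apply L2_upper; auto.
  - intros [t1 [t2 [H1 [H2 [E1 E2]]]]].
    exists (t2 - t1), (fun t => (t1 + t, F2 (t1 + t))).
    assert (Gp : forall t, 0 <= t <= t2 - t1 -> (t1 + t, F2 (t1 + t)) = G2 (t1 + t)).
    { intros t Ht. rewrite G2_low by lra. reflexivity. }
    split. lra. split. rewrite Rplus_0_r, <- E1, G2_low by lra. reflexivity.
    split. rewrite <- E2, G2_low by lra. f_equal; f_equal; ring.
    split.
    + intros t Ht. split. split. rewrite Gp by lra. apply G2_in. lra. simpl. apply F2_nonneg. lra.
      split; simpl; apply (ex_derive_continuous (K:=R_AbsRing) (V:=R_NormedModule)); unfold F2; auto_derive; auto.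
    + intros t Ht. split. exact I. split; simpl; unfold F2; auto_derive; auto; field.
Qed.

Lemma Z2_reachY a b : Lambda2 a -> Lambda2 b ->
  (reach_by (fY Z2) (fun _ => True) (fun x => Lambda2 x /\ sw Z2 x <= 0) a b <->
   exists th1 th2, 1/2 <= th1 <= th2 /\ th2 <= 3/2 /\ G2 th1 = a /\ G2 th2 = b).
Proof.
  intros Ha Hb. split.
  - intros [T [psi [HT [P0 [PT [HS HC]]]]]].
    assert (E : fst (psi T) - fst (psi 0) = -1 * T).
    { apply fst_path. exact HT. intros t Ht. apply HS. exact Ht.
      intros t Ht. destruct (HC t Ht) as [_ [D _]]. exact D. }
    destruct (HS 0 ltac:(lra)) as [[_ S0] _]. destruct (HS T ltac:(lra)) as [[_ ST] _].
    rewrite P0 in S0, E. rewrite PT in ST, E. simpl in S0, ST.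
    exists (1 - fst a), (1 - fst b). pose proof Ha as [Hxa _]. pose proof Hb as [Hxb _].
    split. lra. split. lra. split; apply L2_lower; auto.
  - intros [t1 [t2 [H1 [H2 [E1 E2]]]]].
    exists (t2 - t1), (fun t => (1 - (t1 + t), - F2 (1 - (t1 + t)))).
    assert (Gp : forall t, 0 <= t <= t2 - t1 -> (1 - (t1 + t), - F2 (1 - (t1 + t))) = G2 (t1 + t)).
    { intros t Ht. rewrite G2_high by lra. reflexivity. }
    split. lra. split. rewrite Rplus_0_r, <- E1, G2_high by lra. reflexivity.
    split. rewrite <- E2, G2_high by lra. replace (t1 + (t2 - t1)) with t2 by ring. reflexivity.
    split.
    + intros t Ht. split. split. rewrite Gp by lra. apply G2_in. lra. simpl.
      pose proof (F2_nonneg (1 - (t1 + t)) ltac:(lra)). lra.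
      split; simpl; apply (ex_derive_continuous (K:=R_AbsRing) (V:=R_NormedModule)); unfold F2; auto_derive; auto.
    + intros t Ht. split. exact I. split; simpl; unfold F2; auto_derive; auto; field.
Qed.

Lemma Z2_reachZT a b : Lambda2 a ->
  (reach_by (ZT Z2) (slide_esc Z2) (fun x => Lambda2 x /\ sw Z2 x = 0) a b <->
   a = b /\ Lambda2 a /\ snd a = 0).
Proof.
  intros Ha. split.
  - intros [T [psi [HT [P0 [PT [HS HC]]]]]].
    destruct (Req_dec T 0) as [->|HT0].
    + rewrite <- P0, <- PT. split. reflexivity. destruct (HS 0 ltac:(lra)) as [[H1 H2] _]. auto.
    + exfalso. destruct (HC (T / 2) ltac:(lra)) as [[_ Hsl] _].
      rewrite Z2_Xf, Z2_Yf in Hsl.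
      pose proof (Rle_0_sqr (fst (psi (T / 2)) / 2 - 4 * fst (psi (T / 2)) ^ 3)). unfold Rsqr in *. lra.
  - intros [<- [H1 H2]]. exists 0, (fun _ => a). split. lra. split. reflexivity. split. reflexivity.
    split. intros t Ht. split. split. exact H1. exact H2. apply cont_at_const. intros t Ht. lra.
Qed.

Definition mx (x y : R) : R := (x + y + Rabs (x - y)) / 2.
Lemma mx_ge x y : mx x y >= x /\ mx x y >= y.
Proof. unfold mx, Rabs. destruct Rcase_abs; split; lra. Qed.
Lemma mx_cases x y : mx x y = x \/ mx x y = y.
Proof. unfold mx, Rabs. destruct Rcase_abs; [right|left]; lra. Qed.

Lemma c_abs f t : continuity_pt f t -> continuity_pt (fun s => Rabs (f s)) t.
Proof. intro H. apply (continuity_pt_comp f Rabs). exact H. apply Rcontinuity_abs. Qed.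
Lemma c_const c t : continuity_pt (fun _ => c) t.
Proof. apply continuity_pt_const. intros a b; reflexivity. Qed.
Lemma c_mx f g t : continuity_pt f t -> continuity_pt g t -> continuity_pt (fun s => mx (f s) (g s)) t.
Proof.
  intros Hf Hg. unfold mx.
  apply (continuity_pt_ext (fun s => (f s + g s + Rabs (f s - g s)) * (/ 2))).
  intro; reflexivity.
  apply ccomb_mult. apply ccomb_plus. apply ccomb_plus; assumption. apply c_abs. apply ccomb_minus; assumption.
  apply c_const.
Qed.

Lemma inv_cont (Af Bf : R -> pt) a b (L : pt -> Prop) (sg : pt -> R) : a <= b ->
  (forall th, a <= th <= b -> cont_at Af th) -> (forall th, a <= th <= b -> cont_at Bf th) ->
  (forall t1 t2, a <= t1 <= b -> a <= t2 <= b -> Af t1 = Af t2 -> Bf t1 = Bf t2) ->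
  (forall q, L q -> a <= sg q <= b /\ Af (sg q) = q) ->
  rel_continuous L (fun q => Bf (sg q)).
Proof.
  intros Hab HA HB Hfib Hsg q0 Lq0 eps He.
  destruct (Hsg q0 Lq0) as [Hr0 E0]. set (th0 := sg q0) in *.
  set (m := fun th => mx (Rabs (fst (Af th) - fst q0)) (Rabs (snd (Af th) - snd q0))).
  set (n := fun th => mx (Rabs (fst (Bf th) - fst (Bf th0))) (Rabs (snd (Bf th) - snd (Bf th0)))).
  set (M := fun th => mx (m th) (eps - n th)).
  assert (Mpos : forall th, a <= th <= b -> M th > 0).
  { intros th Hth. unfold M. destruct (mx_ge (m th) (eps - n th)) as [G1 G2].
    destruct (Rlt_le_dec (n th) eps). lra.
    assert (Bf th <> Bf th0).
    { intro E. unfold n in r. rewrite E in r. rewrite !Rminus_eq_0, Rabs_R0 in r. unfold mx in r.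
      rewrite Rminus_eq_0, Rabs_R0 in r. lra. }
    assert (Af th <> q0). { intro E. apply H. apply Hfib; auto. rewrite E, E0. reflexivity. }
    assert (m th > 0).
    { unfold m. destruct (mx_ge (Rabs (fst (Af th) - fst q0)) (Rabs (snd (Af th) - snd q0))) as [K1 K2].
      destruct (Req_dec (fst (Af th)) (fst q0)); destruct (Req_dec (snd (Af th)) (snd q0)).
      exfalso. apply H0. rewrite (surjective_pairing (Af th)), (surjective_pairing q0). f_equal; auto.
      assert (snd (Af th) - snd q0 <> 0) by lra. pose proof (Rabs_pos_lt _ H3). lra.
      assert (fst (Af th) - fst q0 <> 0) by lra. pose proof (Rabs_pos_lt _ H3). lra.
      assert (fst (Af th) - fst q0 <> 0) by lra. pose proof (Rabs_pos_lt _ H3). lra. }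
    lra. }
  assert (Mc : forall th, a <= th <= b -> continuity_pt M th).
  { intros th Hth. destruct (proj1 (cont_at_iff _ _) (HA th Hth)) as [A1 A2].
    destruct (proj1 (cont_at_iff _ _) (HB th Hth)) as [B1 B2].
    unfold M, m, n. apply c_mx. apply c_mx; apply c_abs; apply ccomb_minus; auto using c_const.
    apply ccomb_minus. apply c_const. apply c_mx; apply c_abs; apply ccomb_minus; auto using c_const. }
  destruct (continuity_ab_min M a b Hab Mc) as [tm [Hmin Htm]].
  pose proof (Mpos tm Htm) as Hmu.
  exists (M tm). split. exact Hmu. intros q Lq H1 H2.
  destruct (Hsg q Lq) as [Hr E]. set (th := sg q) in *.
  specialize (Hmin th Hr).
  assert (Hm : m th < M tm).
  { unfold m. rewrite E. destruct (mx_cases (Rabs (fst q - fst q0)) (Rabs (snd q - snd q0))) as [C|C]; rewrite C; lra. }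
  assert (Hn : eps - n th >= M tm).
  { change (M th) with (mx (m th) (eps - n th)) in Hmin. destruct (mx_cases (m th) (eps - n th)) as [C|C]; rewrite C in Hmin; lra. }
  destruct (mx_ge (Rabs (fst (Bf th) - fst (Bf th0))) (Rabs (snd (Bf th) - snd (Bf th0)))) as [K1 K2].
  fold (n th) in K1, K2. split; lra.
Qed.

Theorem theoremB :
  forall (Zt : psvf) (g : R -> pt) (p : pt),
    is_psvf Zt ->
    homoclinic_loop1 Zt g p ->
    sigma_equiv Z2 Lambda2 Zt (fun q => exists t : R, g t = q).
Proof.
  intros Zt g p HZ Hh. pose proof Hh as [Hg _].
  destruct (loop_data Zt g p HZ Hh) as [A [t0 [s1 [u1 [s2 HL]]]]].
  set (H := Hf g A t0 s1 u1 s2).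
  set (sigt := fun q => epsilon (inhabits 0) (fun th => -1/2 <= th <= 3/2 /\ H th = q)).
  assert (Hsigt : forall q, orbit g q -> -1/2 <= sigt q <= 3/2 /\ H (sigt q) = q).
  { intros q Hq. unfold sigt. apply (epsilon_spec (inhabits 0) (fun th => -1/2 <= th <= 3/2 /\ H th = q)).
    apply (H_cover Zt g A t0 s1 u1 s2 HL). exact Hq. }
  assert (HE : forall a b, -1/2 <= a <= 3/2 -> -1/2 <= b <= 3/2 -> (H a = H b <-> G2 a = G2 b)).
  { intros a b Ha Hb. unfold H. rewrite (H_eq Zt g A t0 s1 u1 s2 HL a b Ha Hb). rewrite (G2_eq a b Ha Hb). tauto. }
  assert (Hin : forall th, orbit g (H th)).
  { intro th. exists (phi5 A t0 s1 u1 s2 th). reflexivity. }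
  unfold sigma_equiv. exists (fun q => H (sig2 q)), (fun q => G2 (sigt q)).
  split. { intros q _. apply Hin. }
  split. { intros q Hq. apply G2_in. apply Hsigt. exact Hq. }
  split.
  { intros q Lq. destruct (sig2_ok q Lq) as [R1 E1]. destruct (Hsigt (H (sig2 q)) (Hin _)) as [R2 E2].
    rewrite <- E1 at 2. apply HE; auto. }
  split.
  { intros q Hq. destruct (Hsigt q Hq) as [R1 E1]. destruct (sig2_ok (G2 (sigt q)) (G2_in _ R1)) as [R2 E2].
    rewrite <- E1 at 2. apply HE; auto. }
  split.
  { apply (inv_cont G2 H (-1/2) (3/2) Lambda2 sig2). lra.
    intros; apply G2_cont. intros; apply (H_cont Zt g A t0 s1 u1 s2 Hg HL).
    intros t1 t2 H1 H2 E. apply HE; auto. exact sig2_ok. }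
  split.
  { apply (inv_cont H G2 (-1/2) (3/2) (orbit g) sigt). lra.
    intros; apply (H_cont Zt g A t0 s1 u1 s2 Hg HL). intros; apply G2_cont.
    intros t1 t2 H1 H2 E. apply HE; auto. exact Hsigt. }
  split.
  { intros q Lq. destruct (sig2_ok q Lq) as [R1 E1]. simpl.
    rewrite <- E1 at 1. rewrite (G2_sw _ R1). unfold H. rewrite (H_sw Zt g A t0 s1 u1 s2 HL _ R1). tauto. }
  assert (Bridge : forall th q, -1/2 <= th <= 3/2 -> Lambda2 q -> (H th = H (sig2 q) <-> G2 th = q)).
  { intros th q Hth Lq. destruct (sig2_ok q Lq) as [R1 E1]. rewrite (HE th (sig2 q) Hth R1). rewrite E1. tauto. }
  split.
  { intros a b La Lb. rewrite (Z2_reachX a b La Lb).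
    change (fun x => (exists t : R, g t = x) /\ sw Zt x >= 0) with (fun x => orbit g x /\ sw Zt x >= 0).
    rewrite (H_reachX Zt g A t0 s1 u1 s2 HZ Hg HL). fold H.
    split; intros [t1 [t2 [H1 [H2 [E1 E2]]]]]; exists t1, t2; split; auto; split; auto.
    split; apply Bridge; auto; lra.
    split; apply Bridge; auto; lra. }
  split.
  { intros a b La Lb. rewrite (Z2_reachY a b La Lb).
    change (fun x => (exists t : R, g t = x) /\ sw Zt x <= 0) with (fun x => orbit g x /\ sw Zt x <= 0).
    rewrite (H_reachY Zt g A t0 s1 u1 s2 HZ Hg HL). fold H.
    split; intros [t1 [t2 [H1 [H2 [E1 E2]]]]]; exists t1, t2; split; auto; split; auto.
    split; apply Bridge; auto; lra.
    split; apply Bridge; auto; lra. }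
  { intros a b La Lb. rewrite (Z2_reachZT a b La).
    change (fun x => (exists t : R, g t = x) /\ sw Zt x = 0) with (fun x => orbit g x /\ sw Zt x = 0).
    rewrite (reachZT_time Zt g A t0 s1 u1 s2 HL).
    destruct (sig2_ok a La) as [Ra Ea]. destruct (sig2_ok b Lb) as [Rb Eb].
    rewrite (HE _ _ Ra Rb), Ea, Eb.
    assert (Sw : snd a = 0 <-> sw Zt (H (sig2 a)) = 0).
    { rewrite <- Ea at 1. rewrite (G2_sw _ Ra). unfold H. rewrite (H_sw Zt g A t0 s1 u1 s2 HL _ Ra). tauto. }
    split.
    - intros [E [_ S]]. split. exact E. split. apply Hin. apply Sw. exact S.
    - intros [E [_ S]]. split. exact E. split. exact La. apply Sw. exact S. }
Qed.
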